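(* Let $N=1$ and $p>1$. Then the equation $-u''=|u|^{p-1}u+M|u'|^{\frac{2p}{p+1}}$ admits a ground state $u$ if and only if $M\le-\mu^*(1)$. Such a ground state satisfies $u(r)\sim U_{2,M}(r)$ as $r\to\infty$. Furthermore, if $M<-\mu^*(1)$ there exists a positive singular solution $u$ on $(0,\infty)$ which satisfies $u(r)\sim U_{1,M}(r)$ as $r\to0$ and $u(r)\sim U_{2,M}(r)$ as $r\to\infty$.
   Context: A ground state is a nonnegative $u\in C^2([0,\infty))$ with $u'(0)=0$ solving $-u''=|u|^{p-1}u+M|u'|^{\frac{2p}{p+1}}$ on $(0,\infty)$. Let $\mu^*(1)=(p+1)\left(\frac{p+1}{2p}\right)^{\frac{p}{p+1}}$ and $K=-\frac{p+1}{p-1}$. For $M<-\mu^*(1)$ the equation $X^{p-1}+M\left(\frac{2}{p-1}\right)^{\frac{2p}{p+1}}X^{\frac{p-1}{p+1}}-\frac{2K}{p-1}=0$ has exactly two positive roots $X_{1,M}<X_{2,M}$, and for $M=-\mu^*(1)$ a unique positive root, denoted $X_{1,M}=X_{2,M}$. Set $U_{j,M}(r)=X_{j,M}r^{-\frac{2}{p-1}}$. $f\sim g$ means $f/g\to1$. *)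

(* Defs.v *)
From Stdlib Require Import Reals.
From Coquelicot Require Import Coquelicot.
Open Scope R_scope.

(* x^a for x >= 0 and a > 0, with the convention 0^a = 0
   (Stdlib's Rpower 0 a = 1, which is wrong for our purposes). *)
Definition pw (x a : R) : R := if Rlt_dec 0 x then Rpower x a else 0.

Definition mu_star (p : R) : R :=
  (p + 1) * Rpower ((p + 1) / (2 * p)) (p / (p + 1)).

Definition Kc (p : R) : R := - (p + 1) / (p - 1).

Definition is_pos_root (p M X : R) : Prop :=
  0 < X /\
  Rpower X (p - 1)
  + M * Rpower (2 / (p - 1)) (2 * p / (p + 1)) * Rpower X ((p - 1) / (p + 1))
  - 2 * Kc p / (p - 1) = 0.

Definition is_X1 (p M X : R) : Prop :=
  is_pos_root p M X /\ forall Y, is_pos_root p M Y -> X <= Y.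
Definition is_X2 (p M X : R) : Prop :=
  is_pos_root p M X /\ forall Y, is_pos_root p M Y -> Y <= X.

Definition U_of (p X r : R) : R := X * Rpower r (- (2 / (p - 1))).

Definition solves_at (p M : R) (u : R -> R) (r : R) : Prop :=
  - Derive (Derive u) r
  = pw (Rabs (u r)) (p - 1) * u r + M * pw (Rabs (Derive u r)) (2 * p / (p + 1)).

Definition C2_at (u : R -> R) (r : R) : Prop :=
  ex_derive u r /\ ex_derive (Derive u) r /\ continuous (Derive (Derive u)) r.

(* Ground state: u in C^2([0,oo)) (represented as the restriction of a C^2
   function on R), u'(0) = 0, u >= 0 on [0,oo), u not identically zero on
   [0,oo), solving the ODE on (0,oo). *)
Definition is_ground_state (p M : R) (u : R -> R) : Prop :=
  (forall r, C2_at u r) /\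
  Derive u 0 = 0 /\
  (forall r, 0 <= r -> 0 <= u r) /\
  (exists r, 0 <= r /\ u r <> 0) /\
  (forall r, 0 < r -> solves_at p M u r).

Definition is_pos_sol_0inf (p M : R) (u : R -> R) : Prop :=
  forall r, 0 < r -> 0 < u r /\ C2_at u r /\ solves_at p M u r.

Definition equiv_infty (f g : R -> R) : Prop :=
  is_lim (fun r => f r / g r) p_infty (Finite 1).
Definition equiv_0 (f g : R -> R) : Prop :=
  filterlim (fun r => f r / g r) (at_right 0) (locally 1).

(* Main.v *)
Require Import Defs.
From Stdlib Require Import Reals Lra Psatz Classical ClassicalEpsilon.
From Coquelicot Require Import Coquelicot.
Open Scope R_scope.

Lemma cont_eps (f : R -> R) (x : R) : continuity_pt f x ->
  forall eps, 0 < eps -> exists del, 0 < del /\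
    forall y, Rabs (y - x) < del -> Rabs (f y - f x) < eps.
Proof.
  intros H eps He. destruct (H eps He) as [d [Hd Hy]].
  exists d; split; [lra|]. intros y Hyx.
  destruct (Req_dec y x) as [-> | Hne].
  - rewrite Rminus_diag, Rabs_R0; lra.
  - apply (Hy y). split; [split; [exact I| auto] | exact Hyx].
Qed.

Lemma eps_cont (f : R -> R) (x : R) :
  (forall eps, 0 < eps -> exists del, 0 < del /\
    forall y, Rabs (y - x) < del -> Rabs (f y - f x) < eps) -> continuity_pt f x.
Proof.
  intros H eps He. destruct (H eps He) as [d [Hd Hy]].
  exists d; split; [lra|]. intros y [_ Hyx]. apply Hy. exact Hyx.
Qed.

Lemma is_derive_cont (f : R -> R) (x l : R) : is_derive f x l -> continuity_pt f x.
Proof.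
  intro H. apply continuity_pt_filterlim. apply (ex_derive_continuous f x).
  exists l; exact H.
Qed.

Lemma d_opp f x l : is_derive f x l -> is_derive (fun t => - f t) x (- l).
Proof. intros H. apply is_derive_Reals in H. apply is_derive_Reals. exact (derivable_pt_lim_opp f x l H). Qed.
Lemma d_plus f g x l1 l2 : is_derive f x l1 -> is_derive g x l2 -> is_derive (fun t => f t + g t) x (l1 + l2).
Proof. intros H1 H2. apply is_derive_Reals in H1, H2. apply is_derive_Reals. exact (derivable_pt_lim_plus f g x l1 l2 H1 H2). Qed.
Lemma d_minus f g x l1 l2 : is_derive f x l1 -> is_derive g x l2 -> is_derive (fun t => f t - g t) x (l1 - l2).
Proof. intros H1 H2. apply is_derive_Reals in H1, H2. apply is_derive_Reals. exact (derivable_pt_lim_minus f g x l1 l2 H1 H2). Qed.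
Lemma d_mult f g x l1 l2 : is_derive f x l1 -> is_derive g x l2 -> is_derive (fun t => f t * g t) x (l1 * g x + f x * l2).
Proof. intros H1 H2. apply is_derive_Reals in H1, H2. apply is_derive_Reals. exact (derivable_pt_lim_mult f g x l1 l2 H1 H2). Qed.
Lemma d_scal f x c l : is_derive f x l -> is_derive (fun t => c * f t) x (c * l).
Proof. intros H. apply is_derive_Reals in H. apply is_derive_Reals. exact (derivable_pt_lim_scal f c x l H). Qed.
Lemma d_ext (f g : R -> R) x l : (forall t, f t = g t) -> is_derive f x l -> is_derive g x l.
Proof. intros E H. apply (is_derive_ext f g); auto. Qed.
Lemma d_eq (f : R -> R) (x l l' : R) : l = l' -> is_derive f x l -> is_derive f x l'.
Proof. intros ->; auto. Qed.

Lemma Rabs_def2b a b : Rabs a <= b -> - b <= a <= b.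
Proof. unfold Rabs; destruct (Rcase_abs a); intros; lra. Qed.

Lemma d_comp (f g : R -> R) x lf lg : is_derive f (g x) lf -> is_derive g x lg ->
  is_derive (fun t => f (g t)) x (lf * lg).
Proof.
  intros H1 H2. apply is_derive_Reals in H1, H2. apply is_derive_Reals.
  exact (derivable_pt_lim_comp g f x lg lf H2 H1).
Qed.

Lemma incr_deriv (f df : R -> R) (x y : R) : x <= y ->
  (forall t, x < t < y -> is_derive f t (df t)) ->
  (forall t, x <= t <= y -> continuity_pt f t) ->
  (forall t, x < t < y -> 0 <= df t) -> f x <= f y.
Proof.
  intros Hxy Hd Hc Hpos.
  destruct (MVT_gen f x y (fun t => Rmax 0 (df t))) as [c [Hc1 Hc2]].
  - intros t. rewrite Rmin_left, Rmax_right by lra. intro Ht.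
    rewrite Rmax_right by (apply Hpos; lra). apply Hd; lra.
  - intros t. rewrite Rmin_left, Rmax_right by lra. apply Hc.
  - assert (0 <= Rmax 0 (df c)) by apply Rmax_l.
    assert (0 <= Rmax 0 (df c) * (y - x)) by (apply Rmult_le_pos; lra). lra.
Qed.

Lemma sincr_deriv (f df : R -> R) (x y : R) : x < y ->
  (forall t, x < t < y -> is_derive f t (df t)) ->
  (forall t, x <= t <= y -> continuity_pt f t) ->
  (forall t, x < t < y -> 0 < df t) -> f x < f y.
Proof.
  intros Hxy Hd Hc Hpos.
  set (m := (x + y) / 2).
  assert (H1 : f x <= f m).
  { apply (incr_deriv f df); try (intros; apply Hd || apply Hc || (apply Rlt_le; apply Hpos); unfold m in *; lra). unfold m; lra. }
  destruct (MVT_gen f m y df) as [c [Hc1 Hc2]].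
  - intros t. unfold m. rewrite Rmin_left, Rmax_right by lra. intro; apply Hd; lra.
  - intros t. unfold m. rewrite Rmin_left, Rmax_right by lra. intro; apply Hc; lra.
  - unfold m in Hc1. rewrite Rmin_left, Rmax_right in Hc1 by lra.
    destruct (Req_dec c y) as [-> | Hne].
    +
      destruct (MVT_gen f m ((m+y)/2) df) as [c' [Hc1' Hc2']].
      * intros t. unfold m in *. rewrite Rmin_left, Rmax_right by lra. intro; apply Hd; lra.
      * intros t. unfold m in *. rewrite Rmin_left, Rmax_right by lra. intro; apply Hc; lra.
      * unfold m in Hc1'. rewrite Rmin_left, Rmax_right in Hc1' by lra.
        assert (0 < df c') by (apply Hpos; lra).
        assert (f ((m+y)/2) <= f y).
        { apply (incr_deriv f df); try (intros; apply Hd || apply Hc || (apply Rlt_le; apply Hpos); unfold m in *; lra). unfold m; lra. }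
        assert (0 < df c' * ((m + y) / 2 - m)) by (apply Rmult_lt_0_compat; unfold m in *; lra).
        lra.
    + assert (0 < df c) by (apply Hpos; unfold m in *; lra).
      assert (0 < df c * (y - m)) by (apply Rmult_lt_0_compat; unfold m in *; lra).
      lra.
Qed.

Lemma incr_deriv_closed (f df : R -> R) (x y : R) : x <= y ->
  (forall t, x <= t <= y -> is_derive f t (df t)) ->
  (forall t, x <= t <= y -> 0 <= df t) -> f x <= f y.
Proof.
  intros Hxy Hd Hp. apply (incr_deriv f df); auto.
  - intros t Ht; apply Hd; lra.
  - intros t Ht; apply (is_derive_cont f t (df t)); auto.
  - intros t Ht; apply Hp; lra.
Qed.

Lemma cmp_deriv (f g df dg : R -> R) (x y : R) : x <= y ->
  (forall t, x < t < y -> is_derive f t (df t)) ->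
  (forall t, x < t < y -> is_derive g t (dg t)) ->
  (forall t, x <= t <= y -> continuity_pt f t) ->
  (forall t, x <= t <= y -> continuity_pt g t) ->
  (forall t, x < t < y -> df t <= dg t) -> f y - f x <= g y - g x.
Proof.
  intros Hxy Hf Hg Hcf Hcg Hle.
  assert (H := incr_deriv (fun t => g t - f t) (fun t => dg t - df t) x y Hxy).
  cbv beta in H. cut (g x - f x <= g y - f y). lra.
  apply H.
  - intros t Ht. apply (is_derive_minus g f); auto.
  - intros t Ht. apply continuity_pt_minus; auto.
  - intros t Ht. specialize (Hle t Ht). lra.
Qed.

Lemma deriv_neg_local (f : R -> R) (x l : R) : is_derive f x l -> l < 0 ->
  exists del, 0 < del /\ (forall y, x < y < x + del -> f y < f x) /\
                         (forall y, x - del < y < x -> f x < f y).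
Proof.
  intros Hd Hl. apply is_derive_Reals in Hd.
  destruct (Hd (- l / 2)) as [[d Hdp] Hdd]; [lra|].
  exists d; split; [exact Hdp|].
  assert (key : forall y, 0 < Rabs (y - x) < d ->
            (f y - f x) / (y - x) < l / 2).
  { intros y Hy. specialize (Hdd (y - x)).
    replace (x + (y - x)) with y in Hdd by ring.
    assert (Hyx : y - x <> 0).
    { intro E; rewrite E, Rabs_R0 in Hy; lra. }
    specialize (Hdd Hyx (proj2 Hy)).
    apply Rabs_def2 in Hdd. lra. }
  split.
  - intros y Hy. assert (Hk := key y). rewrite Rabs_right in Hk by lra.
    specialize (Hk ltac:(lra)).
    set (q := (f y - f x) / (y - x)) in Hk.
    assert (E : f y - f x = q * (y - x)) by (unfold q; field; lra).
    nra.
  - intros y Hy. assert (Hk := key y). rewrite Rabs_left in Hk by lra.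
    specialize (Hk ltac:(lra)).
    set (q := (f y - f x) / (y - x)) in Hk.
    assert (E : f y - f x = q * (y - x)) by (unfold q; field; lra).
    nra.
Qed.

Lemma cont_ind (f : R -> R) (x0 : R) :
  (forall r, x0 < r -> continuity_pt f r) ->
  (exists del, 0 < del /\ forall r, x0 < r < x0 + del -> f r < 0) ->
  (forall r1, x0 < r1 -> f r1 = 0 -> (forall r, x0 < r < r1 -> f r < 0) -> False) ->
  forall r, x0 < r -> f r < 0.
Proof.
  intros Hc [del [Hdel Hneg]] Hfirst x Hx.
  destruct (Rlt_le_dec (f x) 0) as [Hlt|Hge]; [exact Hlt|]. exfalso.
  set (E := fun t => x0 < t <= x /\ forall s, x0 < s < t -> f s < 0).
  assert (HB : bound E) by (exists x; intros t [Ht _]; lra).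
  set (t0 := Rmin (x0 + del / 2) x).
  assert (Ht0 : E t0).
  { split. unfold t0; split; [apply Rmin_case; lra | apply Rmin_r].
    intros s Hs. apply Hneg. unfold t0 in Hs.
    assert (s < x0 + del / 2) by (eapply Rlt_le_trans; [apply Hs| apply Rmin_l]). lra. }
  destruct (completeness E HB (ex_intro _ t0 Ht0)) as [r1 [Hub Hlub]].
  assert (Hr1a : t0 <= r1) by (apply Hub; exact Ht0).
  assert (Ht0p : x0 < t0) by (destruct Ht0 as [[? ?] ?]; lra).
  assert (Hr1b : r1 <= x) by (apply Hlub; intros t [Ht _]; lra).
  assert (Hbelow : forall s, x0 < s < r1 -> f s < 0).
  { intros s Hs. destruct (Rle_lt_dec r1 s) as [Hle|Hlt'].
    - lra.
    -
      destruct (Classical_Prop.classic (exists t, E t /\ s < t)) as [[t [[_ Ht] Hst]]|Hno].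
      + apply Ht; lra.
      + exfalso. assert (r1 <= s); [|lra]. apply Hlub. intros t Et.
        destruct (Rle_lt_dec t s); auto. exfalso; apply Hno; exists t; auto. }
  assert (Hcr := cont_eps f r1 (Hc r1 ltac:(lra))).
  destruct (Rtotal_order (f r1) 0) as [Hn|[Hz|Hp]].
  -
    destruct (Req_dec r1 x) as [-> | Hne]; [lra|].
    destruct (Hcr (- f r1) ltac:(lra)) as [d [Hd Hdd]].
    set (t1 := Rmin (r1 + d / 2) x).
    assert (E t1).
    { split. unfold t1; split; [apply Rmin_case; lra| apply Rmin_r].
      intros s Hs. destruct (Rlt_le_dec s r1) as [Hsl|Hsr]; [apply Hbelow; lra|].
      assert (s < r1 + d/2) by (eapply Rlt_le_trans; [apply Hs|apply Rmin_l]).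
      assert (Rabs (s - r1) < d) by (rewrite Rabs_right; lra).
      specialize (Hdd s ltac:(assumption)). apply Rabs_def2 in Hdd. lra. }
    assert (t1 <= r1) by (apply Hub; assumption).
    unfold t1 in *. revert H0. apply Rmin_case; lra.
  - apply (Hfirst r1); auto; lra.
  - destruct (Hcr (f r1) Hp) as [d [Hd Hdd]].
    set (s := Rmax (r1 - d / 2) ((x0 + r1) / 2)).
    assert (Hs1 : r1 - d/2 <= s) by apply Rmax_l.
    assert (Hs2 : (x0 + r1)/2 <= s) by apply Rmax_r.
    assert (Hs3 : s < r1) by (unfold s; apply Rmax_case; lra).
    assert (Rabs (s - r1) < d) by (rewrite Rabs_left; lra).
    specialize (Hdd s ltac:(assumption)). apply Rabs_def2 in Hdd.
    assert (f s < 0) by (apply Hbelow; lra). lra.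
Qed.

Lemma exp_le_mono x y : x <= y -> exp x <= exp y.
Proof. intros [H| ->]; [apply Rlt_le, exp_increasing; auto| lra]. Qed.
Lemma ln_le_mono x y : 0 < x -> x <= y -> ln x <= ln y.
Proof. intros Hx [H| ->]; [apply Rlt_le, ln_increasing; auto| lra]. Qed.
Lemma ln_lt_mono_inv x y : 0 < x -> 0 < y -> ln x < ln y -> x < y.
Proof. intros Hx Hy H. rewrite <- (exp_ln x), <- (exp_ln y) by auto. apply exp_increasing; auto. Qed.
Lemma exp_lt_mono_inv x y : exp x < exp y -> x < y.
Proof. apply exp_lt_inv. Qed.
Lemma exp_le_inv x y : exp x <= exp y -> x <= y.
Proof. intros H. destruct (Rle_lt_dec x y); auto. apply exp_increasing in r. lra. Qed.

Lemma pw_pos x c : 0 < x -> pw x c = exp (c * ln x).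
Proof. intros H. unfold pw. destruct (Rlt_dec 0 x); [reflexivity|lra]. Qed.
Lemma pw_npos x c : x <= 0 -> pw x c = 0.
Proof. intros H. unfold pw. destruct (Rlt_dec 0 x); [lra|reflexivity]. Qed.
Lemma pw_ge0 x c : 0 <= pw x c.
Proof. unfold pw. destruct (Rlt_dec 0 x); [unfold Rpower; apply Rlt_le, exp_pos|lra]. Qed.

Lemma ball_R (t : R) (e : posreal) s : ball t e s -> Rabs (s - t) < e.
Proof. intro H. exact H. Qed.

Lemma pw_abs_loc c t : 0 < t ->
  locally t (fun s => pw (Rabs s) c = exp (c * ln s)).
Proof.
  intros Ht. exists (mkposreal t Ht). intros s Hs.
  apply ball_R in Hs; simpl in Hs.
  apply Rabs_def2 in Hs. rewrite Rabs_right by lra. apply pw_pos. lra.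
Qed.

Lemma pw_le_mono x y c : 0 <= c -> 0 <= x <= y -> pw x c <= pw y c.
Proof.
  intros Hc [Hx Hxy]. destruct (Req_dec x 0) as [-> | Hne].
  - rewrite pw_npos by lra. apply pw_ge0.
  - rewrite !pw_pos by lra. apply exp_le_mono.
    apply Rmult_le_compat_l; auto. apply ln_le_mono; lra.
Qed.

Lemma pw_mul x y c : 0 <= x -> 0 < y -> pw (x * y) c = pw x c * exp (c * ln y).
Proof.
  intros Hx Hy. destruct (Req_dec x 0) as [-> | Hne].
  - rewrite Rmult_0_l, !pw_npos by lra. ring.
  - rewrite !pw_pos by nra. rewrite ln_mult by lra. rewrite <- exp_plus. f_equal; ring.
Qed.

Lemma pw_small c eps : 0 < c -> 0 < eps -> exists d, 0 < d /\ forall x, Rabs x < d -> pw (Rabs x) c < eps.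
Proof.
  intros Hc He. exists (exp (ln eps / c)). split; [apply exp_pos|].
  intros x Hx. destruct (Req_dec x 0) as [-> | Hne].
  - rewrite Rabs_R0, pw_npos by lra; auto.
  - rewrite pw_pos by (apply Rabs_pos_lt; auto).
    rewrite <- (exp_ln eps) by auto. apply exp_increasing.
    apply ln_increasing in Hx; [|apply Rabs_pos_lt; auto]. rewrite ln_exp in Hx.
    apply (Rmult_lt_compat_l c) in Hx; auto. field_simplify in Hx; lra.
Qed.

Lemma pw_abs_cont c x0 : 0 < c -> continuity_pt (fun x => pw (Rabs x) c) x0.
Proof.
  intros Hc. destruct (Rtotal_order x0 0) as [Hn|[Hz|Hp]].
  - apply continuity_pt_filterlim.
    apply (filterlim_ext_loc (fun x => exp (c * ln (- x)))).
    + exists (mkposreal (-x0) ltac:(lra)). intros s Hs. apply ball_R in Hs; simpl in Hs.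
      apply Rabs_def2 in Hs. rewrite Rabs_left by lra. rewrite pw_pos by lra. reflexivity.
    + rewrite Rabs_left by lra. rewrite pw_pos by lra.
      apply (continuity_pt_filterlim (fun x => exp (c * ln (- x))) x0).
      apply (continuity_pt_comp (fun x => c * ln (- x)) exp).
      * apply continuity_pt_mult. apply continuity_pt_const; intros ??; reflexivity.
        apply (continuity_pt_comp Ropp ln). apply continuity_pt_opp, derivable_continuous_pt, derivable_pt_id.
        apply derivable_continuous_pt. exists (/ (- x0)). apply derivable_pt_lim_ln. lra.
      * apply derivable_continuous_pt, derivable_pt_exp.
  - subst x0. apply eps_cont. intros eps He. destruct (pw_small c eps Hc He) as [d [Hd Hdd]].
    exists d; split; auto. intros y Hy. rewrite Rabs_R0, (pw_npos 0) by lra.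
    rewrite !Rminus_0_r in *. rewrite Rabs_right by apply Rle_ge, pw_ge0. apply Hdd; auto.
  - apply continuity_pt_filterlim.
    apply (filterlim_ext_loc (fun x => exp (c * ln x))).
    + exists (mkposreal x0 Hp). intros s Hs. apply ball_R in Hs; simpl in Hs.
      apply Rabs_def2 in Hs. rewrite Rabs_right by lra. rewrite pw_pos by lra. reflexivity.
    + rewrite Rabs_right by lra. rewrite pw_pos by lra.
      apply (continuity_pt_filterlim (fun x => exp (c * ln x)) x0).
      apply (continuity_pt_comp (fun x => c * ln x) exp).
      * apply continuity_pt_mult. apply continuity_pt_const; intros ??; reflexivity.
        apply derivable_continuous_pt. exists (/ x0). apply derivable_pt_lim_ln. lra.
      * apply derivable_continuous_pt, derivable_pt_exp.
Qed.

Definition bb (p : R) := (p + 1) / 2.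
Definition qq (p : R) := 2 * p / (p + 1).
Definition Gf p M t := 1 + bb p * t ^ 2 + M * pw (Rabs t) (qq p).
Definition dGf p M t := 2 * bb p * t + M * qq p * pw t (qq p - 1).

Section G.
Variables (p M : R).
Hypothesis hp : 1 < p.

Lemma q_gt1 : 1 < qq p.
Proof. unfold qq. apply (Rmult_lt_reg_r (p+1)); [lra|]. field_simplify; lra. Qed.
Lemma q_lt2 : qq p < 2.
Proof. unfold qq. apply (Rmult_lt_reg_r (p+1)); [lra|]. field_simplify; lra. Qed.
Lemma b_gt1 : 1 < bb p.
Proof. unfold bb; lra. Qed.
Lemma bq_p : bb p * qq p = p.
Proof. unfold bb, qq; field; lra. Qed.

Lemma Gf_0 : Gf p M 0 = 1.
Proof. unfold Gf. rewrite Rabs_R0, pw_npos by lra. ring. Qed.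

Lemma Gf_pos_form t : 0 < t -> Gf p M t = 1 + bb p * t ^ 2 + M * exp (qq p * ln t).
Proof. intros Ht. unfold Gf. rewrite Rabs_right, pw_pos by lra. reflexivity. Qed.

Lemma Gf_cont t : continuity_pt (Gf p M) t.
Proof.
  unfold Gf. apply continuity_pt_plus.
  - apply continuity_pt_plus. apply continuity_pt_const; intros ??; reflexivity.
    apply continuity_pt_mult. apply continuity_pt_const; intros ??; reflexivity.
    apply derivable_continuous_pt. apply derivable_pt_pow.
  - apply continuity_pt_mult. apply continuity_pt_const; intros ??; reflexivity.
    apply pw_abs_cont. pose proof q_gt1; lra.
Qed.

Lemma Gf_deriv t : 0 < t -> is_derive (Gf p M) t (dGf p M t).
Proof.
  intros Ht.
  apply (is_derive_ext_loc (fun s => 1 + bb p * s ^ 2 + M * exp (qq p * ln s))).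
  - generalize (pw_abs_loc (qq p) t Ht). apply filter_imp. intros s Hs. unfold Gf. rewrite Hs. reflexivity.
  - unfold dGf. rewrite pw_pos by lra.
    auto_derive; [lra|].
    replace ((qq p - 1) * ln t) with (qq p * ln t + - ln t) by ring.
    rewrite exp_plus, exp_Ropp, exp_ln by lra. field. lra.
Qed.

Definition phis := exp (ln (- M * qq p / (2 * bb p)) / (2 - qq p)).

Lemma phis_pos : 0 < phis.
Proof. apply exp_pos. Qed.

Lemma dGf_form t : 0 < t ->
  dGf p M t = exp ((qq p - 1) * ln t) * (2 * bb p * exp ((2 - qq p) * ln t) + M * qq p).
Proof.
  intros Ht. unfold dGf. rewrite pw_pos by lra.
  rewrite Rmult_plus_distr_l.
  replace (exp ((qq p - 1) * ln t) * (2 * bb p * exp ((2 - qq p) * ln t)))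
    with (2 * bb p * (exp ((qq p - 1) * ln t) * exp ((2 - qq p) * ln t))) by ring.
  rewrite <- exp_plus. replace ((qq p - 1) * ln t + (2 - qq p) * ln t) with (ln t) by ring.
  rewrite exp_ln by lra. ring.
Qed.

Lemma key_pos : M < 0 -> 0 < - M * qq p / (2 * bb p).
Proof.
  intros HM. pose proof q_gt1; pose proof b_gt1.
  apply Rdiv_lt_0_compat; nra.
Qed.

Lemma dGf_neg t : M < 0 -> 0 < t < phis -> dGf p M t < 0.
Proof.
  intros HM [Ht Htp]. rewrite dGf_form by lra.
  pose proof q_gt1; pose proof q_lt2; pose proof b_gt1; pose proof (key_pos HM).
  assert (Hl : ln t < ln phis) by (apply ln_increasing; lra).
  unfold phis in Hl. rewrite ln_exp in Hl.
  assert (Hl2 : (2 - qq p) * ln t < ln (- M * qq p / (2 * bb p))).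
  { apply (Rmult_lt_compat_l (2 - qq p)) in Hl; [|lra].
    replace ((2 - qq p) * (ln (- M * qq p / (2 * bb p)) / (2 - qq p))) with (ln (- M * qq p / (2 * bb p))) in Hl by (field; lra). lra. }
  apply exp_increasing in Hl2. rewrite exp_ln in Hl2 by auto.
  assert (2 * bb p * exp ((2 - qq p) * ln t) < - M * qq p).
  { apply (Rmult_lt_compat_l (2 * bb p)) in Hl2; [|lra].
    replace (2 * bb p * (- M * qq p / (2 * bb p))) with (- M * qq p) in Hl2 by (field; lra). lra. }
  assert (0 < exp ((qq p - 1) * ln t)) by apply exp_pos.
  rewrite <- (Rmult_0_r (exp ((qq p - 1) * ln t))). apply Rmult_lt_compat_l; lra.
Qed.

Lemma dGf_pos t : phis < t -> 0 < dGf p M t.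
Proof.
  intros Htp. pose proof phis_pos. rewrite dGf_form by lra.
  pose proof q_gt1; pose proof q_lt2; pose proof b_gt1.
  assert (0 < exp ((qq p - 1) * ln t)) by apply exp_pos.
  assert (0 < exp ((2 - qq p) * ln t)) by apply exp_pos.
  destruct (Rlt_le_dec M 0) as [HM|HM].
  2:{ apply Rmult_lt_0_compat; auto. assert (0 <= M * qq p) by (apply Rmult_le_pos; lra). nra. }
  pose proof (key_pos HM).
  assert (Hl : ln phis < ln t) by (apply ln_increasing; lra).
  unfold phis in Hl. rewrite ln_exp in Hl.
  assert (Hl2 : ln (- M * qq p / (2 * bb p)) < (2 - qq p) * ln t).
  { apply (Rmult_lt_compat_l (2 - qq p)) in Hl; [|lra].
    replace ((2 - qq p) * (ln (- M * qq p / (2 * bb p)) / (2 - qq p))) with (ln (- M * qq p / (2 * bb p))) in Hl by (field; lra). lra. }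
  apply exp_increasing in Hl2. rewrite exp_ln in Hl2 by auto.
  assert (- M * qq p < 2 * bb p * exp ((2 - qq p) * ln t)).
  { apply (Rmult_lt_compat_l (2 * bb p)) in Hl2; [|lra].
    replace (2 * bb p * (- M * qq p / (2 * bb p))) with (- M * qq p) in Hl2 by (field; lra). lra. }
  apply Rmult_lt_0_compat; lra.
Qed.

Lemma G_decr s t : M < 0 -> 0 <= s < t -> t <= phis -> Gf p M t < Gf p M s.
Proof.
  intros HM Hst Htp.
  assert (H := sincr_deriv (fun x => - Gf p M x) (fun x => - dGf p M x) s t (proj2 Hst)).
  cbv beta in H. cut (- Gf p M s < - Gf p M t); [lra|]. apply H.
  - intros x Hx. apply (is_derive_opp (Gf p M)). apply Gf_deriv; lra.
  - intros x Hx. apply continuity_pt_opp, Gf_cont.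
  - intros x Hx. assert (dGf p M x < 0) by (apply dGf_neg; auto; lra). lra.
Qed.

Lemma G_incr s t : phis <= s < t -> Gf p M s < Gf p M t.
Proof.
  intros Hst. pose proof phis_pos.
  apply (sincr_deriv (Gf p M) (dGf p M) s t (proj2 Hst)).
  - intros x Hx. apply Gf_deriv; lra.
  - intros x Hx. apply Gf_cont.
  - intros x Hx. apply dGf_pos; lra.
Qed.

Lemma G_pos_Mnonneg t : 0 <= M -> 0 <= t -> 0 < Gf p M t.
Proof.
  intros HM Ht. unfold Gf. pose proof (pw_ge0 (Rabs t) (qq p)). pose proof b_gt1.
  assert (0 <= t ^ 2) by (apply pow2_ge_0). nra.
Qed.

Lemma ln_mu : ln (mu_star p) = ln (p + 1) + p / (p + 1) * (ln (p + 1) - ln (2 * p)).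
Proof.
  unfold mu_star. rewrite ln_mult by (try lra; unfold Rpower; apply exp_pos).
  rewrite ln_Rpower. unfold Rdiv at 2. rewrite ln_mult by (try apply Rinv_0_lt_compat; lra).
  rewrite ln_Rinv by lra. unfold Rdiv. ring.
Qed.

Lemma mu_pos : 0 < mu_star p.
Proof. unfold mu_star, Rpower. pose proof (exp_pos (p / (p + 1) * ln ((p + 1) / (2 * p)))). nra. Qed.

Lemma G_phis : M < 0 -> Gf p M phis = 1 - exp ((p + 1) * (ln (- M) - ln (mu_star p))).
Proof.
  intros HM. pose proof phis_pos. pose proof q_gt1; pose proof q_lt2; pose proof b_gt1.
  pose proof (key_pos HM).
  rewrite Gf_pos_form by auto.
  assert (E1 : phis ^ 2 = exp (qq p * ln phis) * exp ((2 - qq p) * ln phis)).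
  { rewrite <- exp_plus. replace (qq p * ln phis + (2 - qq p) * ln phis) with (2 * ln phis) by ring.
    replace (2 * ln phis) with (ln phis + ln phis) by ring.
    rewrite exp_plus, exp_ln by auto. simpl; ring. }
  assert (E2 : exp ((2 - qq p) * ln phis) = - M * qq p / (2 * bb p)).
  { unfold phis. rewrite ln_exp. replace ((2 - qq p) * (ln (- M * qq p / (2 * bb p)) / (2 - qq p)))
      with (ln (- M * qq p / (2 * bb p))) by (field; lra). apply exp_ln; auto. }
  rewrite E1, E2.
  assert (E3 : exp (qq p * ln phis) = exp (p * ln (- M * qq p / (2 * bb p)))).
  { unfold phis. rewrite ln_exp. f_equal. set (L := ln (- M * qq p / (2 * bb p))).
    unfold qq. field. split; lra. }
  rewrite E3.
  assert (E4 : ln (- M * qq p / (2 * bb p)) = ln (-M) + ln (2 * p) - 2 * ln (p + 1)).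
  { unfold qq, bb. replace (- M * (2 * p / (p + 1)) / (2 * ((p + 1) / 2))) with (-M * (2 * p) * / ((p+1)*(p+1))) by (field; lra).
    assert (0 < -M * (2 * p)) by nra. assert (0 < (p+1)*(p+1)) by nra.
    rewrite ln_mult by (try apply Rinv_0_lt_compat; lra).
    rewrite ln_Rinv by lra. rewrite (ln_mult (p+1) (p+1)) by lra. rewrite (ln_mult (-M) (2*p)) by lra. ring. }
  rewrite E4, ln_mu.
  set (E := exp (p * (ln (- M) + ln (2 * p) - 2 * ln (p + 1)))).
  assert (E5 : exp ((p + 1) * (ln (- M) - (ln (p + 1) + p / (p + 1) * (ln (p + 1) - ln (2 * p)))))
     = - M * E / (p + 1)).
  { replace ((p + 1) * (ln (- M) - (ln (p + 1) + p / (p + 1) * (ln (p + 1) - ln (2 * p)))))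
    with (ln (- M) + p * (ln (- M) + ln (2 * p) - 2 * ln (p + 1)) + - ln (p + 1)) by (field; lra).
    rewrite !exp_plus, exp_Ropp, !exp_ln by lra. fold E. field. lra. }
  rewrite E5. unfold qq, bb. field. lra.
Qed.

Lemma M_neg_of_le : M <= - mu_star p -> M < 0.
Proof. pose proof mu_pos. lra. Qed.

Lemma G_phis_le : M <= - mu_star p -> Gf p M phis <= 0.
Proof.
  intros HM. pose proof mu_pos. rewrite G_phis by lra.
  assert (ln (mu_star p) <= ln (- M)) by (apply ln_le_mono; lra).
  assert (0 <= (p + 1) * (ln (- M) - ln (mu_star p))) by (apply Rmult_le_pos; lra).
  pose proof (exp_ineq1_le ((p + 1) * (ln (- M) - ln (mu_star p)))). lra.
Qed.

Lemma G_phis_lt : M < - mu_star p -> Gf p M phis < 0.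
Proof.
  intros HM. pose proof mu_pos. rewrite G_phis by lra.
  assert (ln (mu_star p) < ln (- M)) by (apply ln_increasing; lra).
  assert (0 < (p + 1) * (ln (- M) - ln (mu_star p))) by (apply Rmult_lt_0_compat; lra).
  assert (H' := exp_ineq1 ((p + 1) * (ln (- M) - ln (mu_star p)))). specialize (H' ltac:(lra)). lra.
Qed.

Lemma G_phis_gt : M < 0 -> - mu_star p < M -> 0 < Gf p M phis.
Proof.
  intros HM0 HM. pose proof mu_pos. rewrite G_phis by lra.
  assert (ln (- M) < ln (mu_star p)) by (apply ln_increasing; lra).
  assert ((p + 1) * (ln (- M) - ln (mu_star p)) < 0).
  { assert (0 < (p + 1) * (ln (mu_star p) - ln (- M))) by (apply Rmult_lt_0_compat; lra). nra. }
  apply exp_increasing in H1. rewrite exp_0 in H1. lra.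
Qed.

Lemma G_big : M < 0 -> exists t, phis < t /\ 0 < Gf p M t.
Proof.
  intros HM. pose proof phis_pos. pose proof q_gt1; pose proof q_lt2; pose proof b_gt1.
  set (s := Rmax (ln phis + 1) (ln (- M / bb p) / (2 - qq p))).
  exists (exp s). split.
  - rewrite <- (exp_ln phis) by auto. apply exp_increasing. unfold s.
    pose proof (Rmax_l (ln phis + 1) (ln (- M / bb p) / (2 - qq p))). lra.
  - rewrite Gf_pos_form by apply exp_pos. rewrite ln_exp.
    assert (E : exp s ^ 2 = exp (qq p * s) * exp ((2 - qq p) * s)).
    { rewrite <- exp_plus. replace (qq p * s + (2 - qq p) * s) with (s + s) by ring.
      rewrite exp_plus. simpl; ring. }
    rewrite E.
    assert (Hs : ln (- M / bb p) <= (2 - qq p) * s).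
    { unfold s. pose proof (Rmax_r (ln phis + 1) (ln (- M / bb p) / (2 - qq p))).
      apply (Rmult_le_compat_l (2 - qq p)) in H3; [|lra].
      replace ((2 - qq p) * (ln (- M / bb p) / (2 - qq p))) with (ln (- M / bb p)) in H3 by (field; lra). lra. }
    apply exp_le_mono in Hs. rewrite exp_ln in Hs by (apply Rdiv_lt_0_compat; lra).
    assert (- M <= bb p * exp ((2 - qq p) * s)).
    { apply (Rmult_le_compat_l (bb p)) in Hs; [|lra]. replace (bb p * (- M / bb p)) with (- M) in Hs by (field; lra). lra. }
    assert (0 < exp (qq p * s)) by apply exp_pos.
    assert (0 <= exp (qq p * s) * (bb p * exp ((2 - qq p) * s) + M)) by (apply Rmult_le_pos; lra).
    nra.
Qed.

Lemma root1 : M <= - mu_star p ->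
  exists phi1, 0 < phi1 /\ phi1 <= phis /\ Gf p M phi1 = 0 /\
    forall t, 0 <= t < phi1 -> 0 < Gf p M t.
Proof.
  intros HM. pose proof (M_neg_of_le HM) as HM0. pose proof phis_pos.
  pose proof (G_phis_le HM).
  destruct (IVT_gen (Gf p M) 0 phis 0) as [x [Hx Gx]].
  - intros t. apply Gf_cont.
  - rewrite Gf_0. split; [eapply Rle_trans; [apply Rmin_r|lra] | eapply Rle_trans; [|apply Rmax_l]; lra].
  - rewrite Rmin_left, Rmax_right in Hx by lra.
    assert (x <> 0) by (intro E; rewrite E, Gf_0 in Gx; lra).
    exists x; repeat split; try lra.
    intros t Ht. rewrite <- Gx. apply G_decr; lra.
Qed.

Lemma root2 : M < - mu_star p ->
  exists phi1 phi2, 0 < phi1 < phi2 /\ Gf p M phi1 = 0 /\ Gf p M phi2 = 0 /\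
    (forall t, 0 <= t < phi1 -> 0 < Gf p M t) /\
    (forall t, phi1 < t < phi2 -> Gf p M t < 0) /\
    (forall t, phi2 < t -> 0 < Gf p M t).
Proof.
  intros HM. assert (HMl : M <= - mu_star p) by lra.
  pose proof (M_neg_of_le HMl) as HM0. pose proof phis_pos.
  pose proof (G_phis_lt HM).
  destruct (root1 HMl) as [x1 [Hx1 [Hx1p [Gx1 Hpos1]]]].
  destruct (G_big HM0) as [t3 [Ht3 Gt3]].
  destruct (IVT_gen (Gf p M) phis t3 0) as [x2 [Hx2 Gx2]].
  - intros t. apply Gf_cont.
  - split; [eapply Rle_trans; [apply Rmin_l|lra] | eapply Rle_trans; [|apply Rmax_r]; lra].
  - rewrite Rmin_left, Rmax_right in Hx2 by lra.
    assert (x2 <> phis) by (intro E; rewrite E in Gx2; lra).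
    assert (x1 <> phis) by (intro E; rewrite E in Gx1; lra).
    exists x1, x2; repeat split; try lra; auto.
    + intros t Ht. destruct (Rle_lt_dec t phis).
      * rewrite <- Gx1. apply G_decr; lra.
      * rewrite <- Gx2. apply G_incr; lra.
    + intros t Ht. rewrite <- Gx2. apply G_incr; lra.
Qed.

Lemma G_ge_phis t : M < 0 -> 0 <= t -> Gf p M phis <= Gf p M t.
Proof.
  intros HM Ht. destruct (Rtotal_order t phis) as [H|[H|H]].
  - apply Rlt_le, G_decr; lra.
  - subst; lra.
  - apply Rlt_le, G_incr; lra.
Qed.

Lemma root0 : - mu_star p < M -> exists g, 0 < g /\ forall t, 0 <= t -> g <= Gf p M t.
Proof.
  intros HM. destruct (Rlt_le_dec M 0) as [HM0|HM0].
  - exists (Gf p M phis). split. apply G_phis_gt; auto. intros t Ht; apply G_ge_phis; auto.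
  - exists 1. split; [lra|]. intros t Ht. unfold Gf.
    pose proof (pw_ge0 (Rabs t) (qq p)). pose proof b_gt1. assert (0 <= t^2) by apply pow2_ge_0.
    assert (0 <= M * pw (Rabs t) (qq p)) by (apply Rmult_le_pos; lra). nra.
Qed.

Definition Lip (be : R) := 2 * bb p * be + Rabs M * qq p * pw be (qq p - 1).

Lemma G_lip t r be : 0 <= t <= be -> 0 <= r <= be ->
  Rabs (Gf p M t - Gf p M r) <= Lip be * Rabs (t - r).
Proof.
  intros Ht Hr. pose proof q_gt1; pose proof b_gt1.
  destruct (MVT_gen (Gf p M) r t (dGf p M)) as [c [Hc Hcd]].
  - intros x Hx. apply Gf_deriv.
    assert (0 <= Rmin r t) by (apply Rmin_case; lra). lra.
  - intros x Hx. apply Gf_cont.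
  - rewrite Hcd, Rabs_mult. apply Rmult_le_compat_r; [apply Rabs_pos|].
    assert (Hc0 : 0 <= c <= be).
    { assert (0 <= Rmin r t) by (apply Rmin_case; lra). assert (Rmax r t <= be) by (apply Rmax_case; lra). lra. }
    unfold dGf, Lip. eapply Rle_trans; [apply Rabs_triang|].
    rewrite !Rabs_mult. rewrite (Rabs_right 2), (Rabs_right (bb p)), (Rabs_right c), (Rabs_right (qq p)),
      (Rabs_right (pw c _)) by (try apply Rle_ge, pw_ge0; lra).
    assert (pw c (qq p - 1) <= pw be (qq p - 1)) by (apply pw_le_mono; lra).
    assert (0 <= Rabs M) by apply Rabs_pos.
    assert (Rabs M * qq p * pw c (qq p - 1) <= Rabs M * qq p * pw be (qq p - 1)).
    { apply Rmult_le_compat_l; [apply Rmult_le_pos; lra| auto]. }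
    nra.
Qed.

Lemma Lip_pos be : 0 <= be -> 0 <= Lip be.
Proof.
  intros H. unfold Lip. pose proof q_gt1; pose proof b_gt1. pose proof (pw_ge0 be (qq p - 1)).
  pose proof (Rabs_pos M).
  assert (0 <= Rabs M * qq p * pw be (qq p - 1)) by (apply Rmult_le_pos; [apply Rmult_le_pos|]; lra). nra.
Qed.
End G.

Definition aa (p : R) := 2 / (p - 1).
Definition phiX p X := aa p * exp (- ((p - 1) / 2) * ln X).
Definition Xof p phi := exp (- aa p * ln (phi / aa p)).

Section X.
Variables (p M : R).
Hypothesis hp : 1 < p.

Lemma aa_pos : 0 < aa p.
Proof. unfold aa. apply Rdiv_lt_0_compat; lra. Qed.

Lemma phiX_pos X : 0 < phiX p X.
Proof. unfold phiX. pose proof aa_pos. pose proof (exp_pos (- ((p - 1) / 2) * ln X)). nra. Qed.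

Lemma Xof_pos phi : 0 < Xof p phi.
Proof. apply exp_pos. Qed.

Lemma phiX_Xof phi : 0 < phi -> phiX p (Xof p phi) = phi.
Proof.
  intros H. pose proof aa_pos. unfold phiX, Xof. rewrite ln_exp.
  replace (- ((p - 1) / 2) * (- aa p * ln (phi / aa p))) with (ln (phi / aa p)) by (unfold aa; field; lra).
  rewrite exp_ln by (apply Rdiv_lt_0_compat; lra). field; lra.
Qed.

Lemma phiX_decr X Y : 0 < X -> X < Y -> phiX p Y < phiX p X.
Proof.
  intros HX HXY. pose proof aa_pos. unfold phiX. apply Rmult_lt_compat_l; auto.
  apply exp_increasing. assert (ln X < ln Y) by (apply ln_increasing; lra).
  assert (0 < (p - 1) / 2) by lra. nra.
Qed.

Lemma root_corr X : 0 < X ->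
  Rpower X (p - 1)
  + M * Rpower (2 / (p - 1)) (2 * p / (p + 1)) * Rpower X ((p - 1) / (p + 1))
  - 2 * Kc p / (p - 1) = Rpower X (p - 1) * Gf p M (phiX p X).
Proof.
  intros HX. pose proof aa_pos. pose proof (phiX_pos X).
  rewrite Gf_pos_form by auto.
  unfold phiX, Rpower, Kc. fold (aa p).
  rewrite ln_mult by (auto; apply exp_pos). rewrite ln_exp.
  set (L := ln X). set (A := ln (aa p)).
  assert (T1 : exp ((p - 1) * L) * (bb p * (aa p * exp (- ((p - 1) / 2) * L)) ^ 2) = bb p * aa p ^ 2).
  { replace ((aa p * exp (- ((p - 1) / 2) * L)) ^ 2) with (aa p ^ 2 * (exp (- ((p - 1) / 2) * L) * exp (- ((p - 1) / 2) * L))) by ring.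
    rewrite <- exp_plus. transitivity (bb p * aa p ^ 2 * (exp ((p - 1) * L) * exp (- ((p - 1) / 2) * L + - ((p - 1) / 2) * L))); [ring|].
    rewrite <- exp_plus. replace ((p - 1) * L + (- ((p - 1) / 2) * L + - ((p - 1) / 2) * L)) with 0 by field.
    rewrite exp_0; ring. }
  assert (T2 : exp ((p - 1) * L) * (M * exp (qq p * (A + - ((p - 1) / 2) * L)))
     = M * exp (2 * p / (p + 1) * A) * exp ((p - 1) / (p + 1) * L)).
  { transitivity (M * (exp ((p - 1) * L) * exp (qq p * (A + - ((p - 1) / 2) * L)))); [ring|].
    rewrite Rmult_assoc. f_equal. rewrite <- !exp_plus. f_equal. unfold qq. field. lra. }
  transitivity (exp ((p - 1) * L) + exp ((p - 1) * L) * (bb p * (aa p * exp (- ((p - 1) / 2) * L)) ^ 2)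
      + exp ((p - 1) * L) * (M * exp (qq p * (A + - ((p - 1) / 2) * L)))); [|ring].
  rewrite T1, T2. unfold aa, bb. field. lra.
Qed.

Lemma root_iff X : 0 < X -> (is_pos_root p M X <-> Gf p M (phiX p X) = 0).
Proof.
  intros HX. unfold is_pos_root. rewrite root_corr by auto.
  assert (0 < Rpower X (p - 1)) by (unfold Rpower; apply exp_pos).
  split.
  - intros [_ H0]. apply Rmult_integral in H0. destruct H0; [lra|auto].
  - intros H0. split; auto. rewrite H0; ring.
Qed.

Lemma X2_of phi1 : 0 < phi1 -> Gf p M phi1 = 0 -> (forall t, 0 <= t < phi1 -> 0 < Gf p M t) ->
  is_X2 p M (Xof p phi1).
Proof.
  intros H1 G1 Hpos. split.
  - apply root_iff. apply Xof_pos. rewrite phiX_Xof; auto.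
  - intros Y HYr. pose proof (proj1 HYr) as HY. apply root_iff in HYr; [|auto].
    destruct (Rle_lt_dec Y (Xof p phi1)) as [Hle|Hlt]; auto. exfalso.
    apply phiX_decr in Hlt; [|apply Xof_pos]. rewrite phiX_Xof in Hlt by auto.
    pose proof (phiX_pos Y). specialize (Hpos (phiX p Y) ltac:(lra)). lra.
Qed.

Lemma X1_of phi2 : 0 < phi2 -> Gf p M phi2 = 0 -> (forall t, phi2 < t -> 0 < Gf p M t) ->
  is_X1 p M (Xof p phi2).
Proof.
  intros H1 G1 Hpos. split.
  - apply root_iff. apply Xof_pos. rewrite phiX_Xof; auto.
  - intros Y HYr. pose proof (proj1 HYr) as HY. apply root_iff in HYr; [|auto].
    destruct (Rle_lt_dec (Xof p phi2) Y) as [Hle|Hlt]; auto. exfalso.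
    apply phiX_decr in Hlt; [|auto]. rewrite phiX_Xof in Hlt by auto.
    specialize (Hpos (phiX p Y) Hlt). lra.
Qed.
End X.

Lemma lim_inf_eps (f : R -> R) l :
  (forall eps, 0 < eps -> exists R0, forall r, R0 < r -> Rabs (f r - l) < eps) ->
  filterlim f (Rbar_locally p_infty) (locally l).
Proof.
  intros H. apply filterlim_locally. intros eps.
  destruct (H eps (cond_pos eps)) as [R0 HR]. exists R0. intros x Hx. apply HR; auto.
Qed.

Lemma lim_r0_eps (f : R -> R) l :
  (forall eps, 0 < eps -> exists d, 0 < d /\ forall r, 0 < r < d -> Rabs (f r - l) < eps) ->
  filterlim f (at_right 0) (locally l).
Proof.
  intros H. apply filterlim_locally. intros eps.
  destruct (H eps (cond_pos eps)) as [d [Hd HR]]. exists (mkposreal d Hd).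
  intros x Hx Hx0. apply HR. split; auto. apply ball_R in Hx. simpl in Hx.
  rewrite Rminus_0_r, Rabs_right in Hx by lra. lra.
Qed.

Lemma h_cont (a la : R) : 0 < la ->
  filterlim (fun z => exp (- a * (ln z - ln la))) (locally la) (locally 1).
Proof.
  intros Hla.
  set (h := fun z => exp (- a * (ln z - ln la))).
  assert (Hc : continuity_pt h la).
  { apply (continuity_pt_comp (fun z => - a * (ln z - ln la)) exp).
    - apply continuity_pt_mult. apply continuity_pt_const; intros ??; reflexivity.
      apply continuity_pt_minus. apply derivable_continuous_pt. exists (/ la). apply derivable_pt_lim_ln; auto.
      apply continuity_pt_const; intros ??; reflexivity.
    - apply derivable_continuous_pt, derivable_pt_exp. }
  apply continuity_pt_filterlim in Hc.
  replace 1 with (h la) by (unfold h; rewrite Rminus_diag, Rmult_0_r, exp_0; reflexivity).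
  exact Hc.
Qed.

Section Asym.
Variables (p : R).
Hypothesis hp : 1 < p.

Lemma ab1 : aa p * (bb p - 1) = 1.
Proof. unfold aa, bb. field. lra. Qed.

Lemma g_deriv (y : R -> R) (phi : R -> R) r :
  is_derive y r (- phi r * exp ((bb p - 1) * y r)) ->
  is_derive (fun r => exp (- (bb p - 1) * y r)) r ((bb p - 1) * phi r).
Proof.
  intros Hy.
  assert (Hf : is_derive (fun z => exp (- (bb p - 1) * z)) (y r) (- (bb p - 1) * exp (- (bb p - 1) * y r))).
  { auto_derive; auto. ring. }
  assert (H := is_derive_comp (fun z => exp (- (bb p - 1) * z)) y r _ _ Hf Hy).
  cbv beta in H.
  replace ((bb p - 1) * phi r) with
    (scal (- phi r * exp ((bb p - 1) * y r)) (- (bb p - 1) * exp (- (bb p - 1) * y r))); [exact H|].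
  unfold scal; simpl; unfold mult; simpl.
  replace (- phi r * exp ((bb p - 1) * y r) * (- (bb p - 1) * exp (- (bb p - 1) * y r)))
    with ((bb p - 1) * phi r * (exp ((bb p - 1) * y r) * exp (- (bb p - 1) * y r))) by ring.
  rewrite <- exp_plus. replace ((bb p - 1) * y r + - (bb p - 1) * y r) with 0 by ring. rewrite exp_0; ring.
Qed.

Lemma ratio_eq (yr Phi r : R) : 0 < r -> 0 < Phi ->
  exp yr / U_of p (Xof p Phi) r =
  exp (- aa p * (ln (exp (- (bb p - 1) * yr) / r) - ln ((bb p - 1) * Phi))).
Proof.
  intros Hr HP. pose proof (aa_pos p hp). unfold U_of, Xof, Rpower. change (2 / (p - 1)) with (aa p).
  assert (Hb : bb p - 1 = / aa p) by (unfold aa, bb; field; lra).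
  assert (E1 : ln (exp (- (bb p - 1) * yr) / r) = - (bb p - 1) * yr - ln r).
  { unfold Rdiv. rewrite ln_mult by (try apply exp_pos; apply Rinv_0_lt_compat; lra).
    rewrite ln_exp, ln_Rinv by lra. ring. }
  assert (E2 : ln ((bb p - 1) * Phi) = - ln (aa p) + ln Phi).
  { rewrite Hb. rewrite ln_mult by (try apply Rinv_0_lt_compat; lra). rewrite ln_Rinv by lra. ring. }
  assert (E3 : ln (Phi / aa p) = ln Phi - ln (aa p)).
  { unfold Rdiv. rewrite ln_mult by (try apply Rinv_0_lt_compat; lra). rewrite ln_Rinv by lra. ring. }
  rewrite E1, E2, E3. unfold Rdiv. rewrite <- exp_plus, <- exp_Ropp, <- exp_plus. f_equal.
  rewrite Hb. field. lra.
Qed.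

Lemma asym_inf (y phi : R -> R) (A Phi : R) : 0 < Phi ->
  (forall r, A < r -> is_derive y r (- phi r * exp ((bb p - 1) * y r))) ->
  (forall eps, 0 < eps -> exists R0, forall r, R0 < r -> Rabs (phi r - Phi) < eps) ->
  is_lim (fun r => exp (y r) / U_of p (Xof p Phi) r) p_infty 1.
Proof.
  intros HP Hy Hphi.
  pose proof (aa_pos p hp) as Ha. assert (Hb1 : 0 < bb p - 1) by (unfold bb; lra).
  set (g := fun r => exp (- (bb p - 1) * y r)).
  set (la := (bb p - 1) * Phi). assert (Hla : 0 < la) by (unfold la; nra).
  assert (Hg : forall r, A < r -> is_derive g r ((bb p - 1) * phi r)).
  { intros r Hr. apply g_deriv. auto. }
  assert (Hgr : filterlim (fun r => g r / r) (Rbar_locally p_infty) (locally la)).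
  { apply lim_inf_eps. intros eps He.
    destruct (Hphi (eps / 2 / (bb p - 1))) as [R0 HR0].
    { apply Rdiv_lt_0_compat; lra. }
    set (R1 := Rmax (Rmax A 0) R0 + 1).
    assert (HR1 : A < R1 /\ 0 < R1 /\ R0 < R1).
    { unfold R1. pose proof (Rmax_l (Rmax A 0) R0). pose proof (Rmax_r (Rmax A 0) R0).
      pose proof (Rmax_l A 0). pose proof (Rmax_r A 0). lra. }
    set (D := g R1 - la * R1).
    exists (R1 + 2 * Rabs D / eps + 1). intros r Hr.
    assert (Hr1 : R1 < r).
    { assert (0 <= 2 * Rabs D / eps) by (apply Rmult_le_pos; [pose proof (Rabs_pos D); lra| apply Rlt_le, Rinv_0_lt_compat; lra]). lra. }
    destruct (MVT_gen g R1 r (fun t => (bb p - 1) * phi t)) as [c [Hc Hcd]].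
    { intros t. rewrite Rmin_left, Rmax_right by lra. intros Ht. apply Hg. lra. }
    { intros t. rewrite Rmin_left, Rmax_right by lra. intros Ht. apply (is_derive_cont g t _ (Hg t ltac:(lra))). }
    rewrite Rmin_left, Rmax_right in Hc by lra.
    set (K := (bb p - 1) * phi c - la).
    assert (HK : Rabs K < eps / 2).
    { unfold K, la. replace ((bb p - 1) * phi c - (bb p - 1) * Phi) with ((bb p - 1) * (phi c - Phi)) by ring.
      rewrite Rabs_mult, Rabs_right by lra. specialize (HR0 c ltac:(lra)).
      apply (Rmult_lt_compat_l (bb p - 1)) in HR0; [|lra].
      replace ((bb p - 1) * (eps / 2 / (bb p - 1))) with (eps / 2) in HR0 by (field; lra). lra. }
    assert (E : g r / r - la = (D + K * (r - R1)) / r).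
    { unfold D, K. replace (g r) with (g R1 + (bb p - 1) * phi c * (r - R1)) by lra. field. lra. }
    rewrite E. unfold Rdiv. rewrite Rabs_mult, (Rabs_right (/ r)) by (apply Rle_ge, Rlt_le, Rinv_0_lt_compat; lra).
    apply (Rmult_lt_reg_r r); [lra|]. rewrite Rmult_assoc, Rinv_l, Rmult_1_r by lra.
    eapply Rle_lt_trans; [apply Rabs_triang|]. rewrite Rabs_mult, (Rabs_right (r - R1)) by lra.
    assert (HD : Rabs D < eps * r / 2).
    { assert (2 * Rabs D / eps < r) by lra.
      apply (Rmult_lt_compat_l eps) in H; [|lra]. replace (eps * (2 * Rabs D / eps)) with (2 * Rabs D) in H by (field; lra). lra. }
    assert (Rabs K * (r - R1) <= eps / 2 * (r - R1)) by (apply Rmult_le_compat_r; lra).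
    nra. }
  assert (Hh : filterlim (fun r => exp (- aa p * (ln (g r / r) - ln la))) (Rbar_locally p_infty) (locally 1)).
  { apply (filterlim_comp _ _ _ (fun r => g r / r) (fun z => exp (- aa p * (ln z - ln la))) _ (locally la)); [exact Hgr| apply h_cont; auto]. }
  unfold is_lim. simpl.
  eapply filterlim_ext_loc; [|exact Hh].
  exists 0. intros r Hr. cbv beta. unfold g, la. rewrite ratio_eq by lra. reflexivity.
Qed.

Lemma asym_0 (y phi : R -> R) (A Phi : R) : 0 < Phi -> 0 < A ->
  (forall r, 0 < r < A -> is_derive y r (- phi r * exp ((bb p - 1) * y r))) ->
  (forall eps, 0 < eps -> exists d, 0 < d /\ forall r, 0 < r < d -> Rabs (phi r - Phi) < eps) ->
  (forall eps, 0 < eps -> exists d, 0 < d /\ forall r, 0 < r < d -> exp (- (bb p - 1) * y r) < eps) ->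
  filterlim (fun r => exp (y r) / U_of p (Xof p Phi) r) (at_right 0) (locally 1).
Proof.
  intros HP HA Hy Hphi Hg0.
  pose proof (aa_pos p hp) as Ha. assert (Hb1 : 0 < bb p - 1) by (unfold bb; lra).
  set (g := fun r => exp (- (bb p - 1) * y r)).
  set (la := (bb p - 1) * Phi). assert (Hla : 0 < la) by (unfold la; nra).
  assert (Hg : forall r, 0 < r < A -> is_derive g r ((bb p - 1) * phi r)).
  { intros r Hr. apply g_deriv. auto. }
  assert (Hgr : filterlim (fun r => g r / r) (at_right 0) (locally la)).
  { apply lim_r0_eps. intros eps He.
    destruct (Hphi (eps / 2 / (bb p - 1))) as [d1 [Hd1 HR0]].
    { apply Rdiv_lt_0_compat; lra. }
    exists (Rmin d1 A). split; [apply Rmin_case; lra|]. intros r [Hr0 Hr].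
    assert (Hrd1 : r < d1) by (eapply Rlt_le_trans; [apply Hr| apply Rmin_l]).
    assert (HrA : r < A) by (eapply Rlt_le_trans; [apply Hr| apply Rmin_r]).
    destruct (Hg0 (eps * r / 4)) as [d3 [Hd3 H3]]. { nra. }
    set (s := Rmin (Rmin (r / 2) (d3 / 2)) (eps * r / (8 * la))).
    assert (Hs : 0 < s /\ s <= r / 2 /\ s < d3 /\ la * s <= eps * r / 8).
    { unfold s. pose proof (Rmin_l (Rmin (r / 2) (d3 / 2)) (eps * r / (8 * la))).
      pose proof (Rmin_r (Rmin (r / 2) (d3 / 2)) (eps * r / (8 * la))).
      pose proof (Rmin_l (r / 2) (d3 / 2)). pose proof (Rmin_r (r / 2) (d3 / 2)).
      repeat split; try lra.
      - repeat apply Rmin_case; try lra. apply Rdiv_lt_0_compat; nra.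
      - apply (Rmult_le_compat_l la) in H0; [|lra].
        replace (la * (eps * r / (8 * la))) with (eps * r / 8) in H0 by (field; lra). lra. }
    assert (Hgs : 0 < g s < eps * r / 4).
    { split. apply exp_pos. apply H3. lra. }
    destruct (MVT_gen g s r (fun t => (bb p - 1) * phi t)) as [c [Hc Hcd]].
    { intros t. rewrite Rmin_left, Rmax_right by lra. intros Ht. apply Hg. lra. }
    { intros t. rewrite Rmin_left, Rmax_right by lra. intros Ht. apply (is_derive_cont g t _ (Hg t ltac:(lra))). }
    rewrite Rmin_left, Rmax_right in Hc by lra.
    set (K := (bb p - 1) * phi c - la).
    assert (HK : Rabs K < eps / 2).
    { unfold K, la. replace ((bb p - 1) * phi c - (bb p - 1) * Phi) with ((bb p - 1) * (phi c - Phi)) by ring.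
      rewrite Rabs_mult, Rabs_right by lra. specialize (HR0 c ltac:(lra)).
      apply (Rmult_lt_compat_l (bb p - 1)) in HR0; [|lra].
      replace ((bb p - 1) * (eps / 2 / (bb p - 1))) with (eps / 2) in HR0 by (field; lra). lra. }
    assert (E : g r / r - la = (g s - la * s + K * (r - s)) / r).
    { unfold K. replace (g r) with (g s + (bb p - 1) * phi c * (r - s)) by lra. field. lra. }
    rewrite E. unfold Rdiv. rewrite Rabs_mult, (Rabs_right (/ r)) by (apply Rle_ge, Rlt_le, Rinv_0_lt_compat; lra).
    apply (Rmult_lt_reg_r r); [lra|]. rewrite Rmult_assoc, Rinv_l, Rmult_1_r by lra.
    eapply Rle_lt_trans; [apply Rabs_triang|]. rewrite Rabs_mult, (Rabs_right (r - s)) by lra.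
    assert (Rabs (g s - la * s) < eps * r / 2).
    { eapply Rle_lt_trans; [apply Rabs_triang|]. rewrite Rabs_Ropp, !Rabs_right by nra. nra. }
    assert (Rabs K * (r - s) <= eps / 2 * (r - s)) by (apply Rmult_le_compat_r; lra).
    nra. }
  assert (Hh : filterlim (fun r => exp (- aa p * (ln (g r / r) - ln la))) (at_right 0) (locally 1)).
  { apply (filterlim_comp _ _ _ (fun r => g r / r) (fun z => exp (- aa p * (ln z - ln la))) _ (locally la)); [exact Hgr| apply h_cont; auto]. }
  eapply filterlim_ext_loc; [|exact Hh].
  exists (mkposreal 1 Rlt_0_1). intros r _ Hr. cbv beta. unfold g, la. rewrite ratio_eq by lra. reflexivity.
Qed.
End Asym.

Lemma is_derive_ln_comp f r df : 0 < f r -> is_derive f r df ->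
  is_derive (fun t => ln (f t)) r (df / f r).
Proof.
  intros Hp Hd.
  assert (Hl : is_derive ln (f r) (/ f r)) by (auto_derive; [lra| field; lra]).
  assert (H := is_derive_comp ln f r _ _ Hl Hd). cbv beta in H.
  unfold scal in H; simpl in H; unfold mult in H; simpl in H.
  replace (df / f r) with (df * / f r) by (unfold Rdiv; ring). exact H.
Qed.

Lemma is_derive_exp_comp f r df c : is_derive f r df ->
  is_derive (fun t => exp (c * f t)) r (c * df * exp (c * f r)).
Proof.
  intros Hd.
  assert (Hl : is_derive (fun z => exp (c * z)) (f r) (c * exp (c * f r))) by (auto_derive; [auto| ring]).
  assert (H := is_derive_comp (fun z => exp (c * z)) f r _ _ Hl Hd). cbv beta in H.
  unfold scal in H; simpl in H; unfold mult in H; simpl in H.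
  replace (c * df * exp (c * f r)) with (df * (c * exp (c * f r))) by ring. exact H.
Qed.

Lemma is_derive_cminus f t df c : is_derive f t df -> is_derive (fun s => c - f s) t (- df).
Proof.
  intros Hd. assert (H := is_derive_minus (fun _ => c) f t 0 df (is_derive_const c t) Hd).
  simpl in H. unfold minus, plus, opp in H; simpl in H.
  replace (- df) with (0 + - df) by ring. exact H.
Qed.

Section Traj.
Variables (p M : R) (y phi : R -> R).
Hypothesis hp : 1 < p.
Hypothesis Hy : forall r, 0 < r -> is_derive y r (- phi r * exp ((bb p - 1) * y r)).
Hypothesis Hphi : forall r, 0 < r -> is_derive phi r (exp ((bb p - 1) * y r) * Gf p M (phi r)).
Hypothesis Hcy : forall r, 0 <= r -> continuity_pt y r.
Hypothesis Hcphi : forall r, 0 <= r -> continuity_pt phi r.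
Hypothesis Hphi0 : phi 0 = 0.
Hypothesis Hphipos : forall r, 0 < r -> 0 < phi r.

Lemma b1pos : 0 < bb p - 1.
Proof. unfold bb; lra. Qed.

Lemma T1 r0 K g : 0 <= r0 -> 0 < K -> 0 < g ->
  (forall r, r0 <= r -> phi r <= K /\ g <= Gf p M (phi r)) -> False.
Proof.
  intros Hr0 HK Hg H.
  pose proof b1pos as Hb.
  set (s0 := r0 + 1).
  set (G := fun r => exp (- (bb p - 1) * y r)).
  assert (HG : forall r, 0 < r -> is_derive G r ((bb p - 1) * phi r)).
  { intros r Hr. apply g_deriv; auto. }
  set (A := G s0). set (B := (bb p - 1) * K).
  assert (HA : 0 < A) by apply exp_pos. assert (HB : 0 < B) by (unfold B; nra).
  assert (HGle : forall r, s0 <= r -> G r <= A + B * (r - s0)).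
  { intros r Hr. assert (H' := cmp_deriv G (fun t => A + B * (t - s0)) (fun t => (bb p - 1) * phi t) (fun _ => B) s0 r Hr).
    assert (G r - G s0 <= A + B * (r - s0) - (A + B * (s0 - s0))); [|unfold A in *; lra].
    apply H'.
    - intros t Ht. apply HG. unfold s0 in *; lra.
    - intros t Ht. auto_derive; auto. ring.
    - intros t Ht. apply (is_derive_cont G t _ (HG t ltac:(unfold s0 in *; lra))).
    - intros t Ht. apply continuity_pt_plus. apply continuity_pt_const; intros ??; reflexivity.
      apply continuity_pt_mult. apply continuity_pt_const; intros ??; reflexivity.
      apply continuity_pt_minus. apply derivable_continuous_pt, derivable_pt_id.
      apply continuity_pt_const; intros ??; reflexivity.
    - intros t Ht. unfold B. apply Rmult_le_compat_l; [lra|]. apply H. unfold s0 in *; lra. }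
  set (h := fun r => g / B * ln (A + B * (r - s0))).
  assert (Hh : forall r, s0 <= r -> is_derive h r (g / (A + B * (r - s0)))).
  { intros r Hr. unfold h. auto_derive. nra. field. split; nra. }
  set (r := s0 + A * exp (K * B / g + 1) / B).
  assert (Hr : s0 < r).
  { unfold r. assert (0 < A * exp (K * B / g + 1) / B) by (apply Rdiv_lt_0_compat; [apply Rmult_lt_0_compat; [auto|apply exp_pos]|auto]). lra. }
  assert (Hcmp : h r - h s0 <= phi r - phi s0).
  { apply (cmp_deriv h phi (fun t => g / (A + B * (t - s0))) (fun t => exp ((bb p - 1) * y t) * Gf p M (phi t)) s0 r); try lra.
    - intros t Ht. apply Hh; lra.
    - intros t Ht. apply Hphi. unfold s0 in *; lra.
    - intros t Ht. apply (is_derive_cont h t _ (Hh t ltac:(lra))).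
    - intros t Ht. apply Hcphi. unfold s0 in *; lra.
    - intros t Ht. assert (HGt := HGle t ltac:(lra)).
      assert (E : exp ((bb p - 1) * y t) = / G t).
      { unfold G. rewrite <- exp_Ropp. f_equal; ring. }
      rewrite E. assert (0 < G t) by apply exp_pos.
      destruct (H t ltac:(unfold s0 in *; lra)) as [_ Hgt].
      unfold Rdiv. rewrite (Rmult_comm (/ G t)). apply Rmult_le_compat; try lra.
      + apply Rlt_le, Rinv_0_lt_compat. nra.
      + apply Rinv_le_contravar; auto. }
  assert (Hhr : h r - h s0 > K).
  { unfold h. replace (A + B * (r - s0)) with (A + A * exp (K * B / g + 1)) by (unfold r; field; lra).
    replace (A + B * (s0 - s0)) with A by ring.
    assert (ln (A * exp (K * B / g + 1)) < ln (A + A * exp (K * B / g + 1))).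
    { apply ln_increasing. apply Rmult_lt_0_compat; [auto|apply exp_pos]. lra. }
    rewrite ln_mult, ln_exp in H0 by (auto; apply exp_pos).
    assert (K * B / g + 1 < ln (A + A * exp (K * B / g + 1)) - ln A) by lra.
    apply (Rmult_lt_compat_l (g / B)) in H1; [|apply Rdiv_lt_0_compat; auto].
    replace (g / B * (K * B / g + 1)) with (K + g / B) in H1 by (field; lra).
    assert (0 < g / B) by (apply Rdiv_lt_0_compat; auto).
    rewrite <- Rmult_minus_distr_l. lra. }
  assert (phi s0 > 0) by (apply Hphipos; unfold s0; lra).
  destruct (H r ltac:(unfold s0 in *; lra)) as [Hk _]. lra.
Qed.

Lemma T2 r0 : 0 < r0 ->
  (forall r, r0 <= r -> (bb p - 1 / 2) * phi r ^ 2 <= Gf p M (phi r)) -> False.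
Proof.
  intros Hr0 H. pose proof b1pos as Hb.
  set (Z := fun r => ln (phi r) + (bb p - 1 / 2) * y r).
  assert (HZ : forall r, 0 < r -> is_derive Z r
     (exp ((bb p - 1) * y r) * Gf p M (phi r) / phi r + (bb p - 1 / 2) * (- phi r * exp ((bb p - 1) * y r)))).
  { intros r Hr. unfold Z. apply (is_derive_plus (fun r => ln (phi r)) (fun r => (bb p - 1/2) * y r)).
    - apply is_derive_ln_comp; auto.
    - apply (is_derive_scal y r (bb p - 1/2)). auto. }
  assert (HZmono : forall r, r0 <= r -> Z r0 <= Z r).
  { intros r Hr. apply (incr_deriv Z (fun r => exp ((bb p - 1) * y r) * Gf p M (phi r) / phi r + (bb p - 1 / 2) * (- phi r * exp ((bb p - 1) * y r))) r0 r Hr).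
    - intros t Ht. apply HZ; lra.
    - intros t Ht. apply (is_derive_cont Z t _ (HZ t ltac:(lra))).
    - intros t Ht. assert (Hp := Hphipos t ltac:(lra)). specialize (H t ltac:(lra)).
      assert (0 < exp ((bb p - 1) * y t)) by apply exp_pos.
      replace (exp ((bb p - 1) * y t) * Gf p M (phi t) / phi t +
        (bb p - 1 / 2) * (- phi t * exp ((bb p - 1) * y t)))
        with (exp ((bb p - 1) * y t) * (Gf p M (phi t) - (bb p - 1 / 2) * phi t ^ 2) / phi t) by (field; lra).
      apply Rmult_le_pos; [apply Rmult_le_pos; lra| apply Rlt_le, Rinv_0_lt_compat; lra]. }
  set (w := fun r => exp (/ 2 * y r)).
  assert (Hw : forall r, 0 < r -> is_derive w r (/ 2 * (- phi r * exp ((bb p - 1) * y r)) * exp (/ 2 * y r))).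
  { intros r Hr. apply is_derive_exp_comp. auto. }
  set (c := exp (Z r0) / 2). assert (Hc : 0 < c) by (unfold c; pose proof (exp_pos (Z r0)); lra).
  set (r := r0 + w r0 / c + 1).
  assert (Hr : r0 < r) by (unfold r; assert (0 < w r0 / c) by (apply Rdiv_lt_0_compat; [apply exp_pos|auto]); lra).
  assert (Hcmp : w r - w r0 <= (- c * r) - (- c * r0)).
  { apply (cmp_deriv w (fun t => - c * t) (fun r => / 2 * (- phi r * exp ((bb p - 1) * y r)) * exp (/ 2 * y r)) (fun _ => - c) r0 r); try lra.
    - intros t Ht. apply Hw; lra.
    - intros t Ht. auto_derive; auto; ring.
    - intros t Ht. apply (is_derive_cont w t _ (Hw t ltac:(lra))).
    - intros t Ht. apply continuity_pt_mult. apply continuity_pt_const; intros ??; reflexivity.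
      apply derivable_continuous_pt, derivable_pt_id.
    - intros t Ht. assert (Hp := Hphipos t ltac:(lra)).
      assert (HZt := HZmono t ltac:(lra)).
      assert (E : phi t * exp ((bb p - 1) * y t) * exp (/ 2 * y t) = exp (Z t)).
      { unfold Z. rewrite exp_plus, exp_ln by auto. rewrite Rmult_assoc, <- exp_plus. f_equal. f_equal. field. }
      assert (exp (Z r0) <= exp (Z t)) by (apply exp_le_mono; auto).
      replace (/ 2 * (- phi t * exp ((bb p - 1) * y t)) * exp (/ 2 * y t))
        with (- (phi t * exp ((bb p - 1) * y t) * exp (/ 2 * y t)) / 2) by field.
      rewrite E. unfold c. lra. }
  assert (0 < w r) by apply exp_pos.
  assert (- c * r - - c * r0 = - w r0 - c) by (unfold r; field; lra). lra.
Qed.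

Lemma phi_incr s t : 0 < s <= t ->
  (forall x, s < x < t -> 0 <= Gf p M (phi x)) -> phi s <= phi t.
Proof.
  intros Hst HG. apply (incr_deriv phi (fun r => exp ((bb p - 1) * y r) * Gf p M (phi r)) s t); try lra.
  - intros x Hx. apply Hphi; lra.
  - intros x Hx. apply Hcphi; lra.
  - intros x Hx. apply Rmult_le_pos; [apply Rlt_le, exp_pos| apply HG; auto].
Qed.

Lemma no_root g : 0 < g -> (forall t, 0 <= t -> g <= Gf p M t) -> False.
Proof.
  intros Hg HG. pose proof (q_gt1 p hp); pose proof (q_lt2 p hp).
  set (pb := exp (ln (2 * Rabs M + 1) / (2 - qq p))).
  assert (Hpb : 0 < pb) by apply exp_pos.
  assert (Hbig : forall t, pb <= t -> (bb p - 1 / 2) * t ^ 2 <= Gf p M t).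
  { intros t Ht. rewrite Gf_pos_form by (auto; lra).
    assert (Hl : ln pb <= ln t) by (apply ln_le_mono; lra).
    unfold pb in Hl. rewrite ln_exp in Hl.
    assert (Hl2 : ln (2 * Rabs M + 1) <= (2 - qq p) * ln t).
    { apply (Rmult_le_compat_l (2 - qq p)) in Hl; [|lra].
      replace ((2 - qq p) * (ln (2 * Rabs M + 1) / (2 - qq p))) with (ln (2 * Rabs M + 1)) in Hl by (field; lra). lra. }
    apply exp_le_mono in Hl2. rewrite exp_ln in Hl2 by (pose proof (Rabs_pos M); lra).
    assert (E : t ^ 2 = exp (qq p * ln t) * exp ((2 - qq p) * ln t)).
    { rewrite <- exp_plus. replace (qq p * ln t + (2 - qq p) * ln t) with (ln t + ln t) by ring.
      rewrite exp_plus, exp_ln by lra. simpl; ring. }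
    rewrite E. pose proof (exp_pos (qq p * ln t)). pose proof (Rabs_pos M).
    assert (HMa : - M <= Rabs M) by (rewrite <- Rabs_Ropp; apply Rle_abs).
    assert (0 <= exp (qq p * ln t) * (exp ((2 - qq p) * ln t) / 2 + M)) by (apply Rmult_le_pos; lra).
    nra. }
  destruct (classic (forall r, 1 <= r -> phi r <= pb)) as [Hall|Hex].
  - apply (T1 1 pb g); try lra; auto. intros r Hr. split; auto.
    apply HG. apply Rlt_le, Hphipos; lra.
  - apply not_all_ex_not in Hex. destruct Hex as [r0 Hr0].
    apply imply_to_and in Hr0. destruct Hr0 as [Hr0 Hr0'].
    apply (T2 r0); [lra|]. intros r Hr. apply Hbig.
    assert (phi r0 <= phi r).
    { apply phi_incr; [lra|]. intros x Hx. assert (g <= Gf p M (phi x)) by (apply HG, Rlt_le, Hphipos; lra). lra. }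
    lra.
Qed.

Section RootCase.
Variables (phi1 L : R).
Hypothesis Hphi1 : 0 < phi1.
Hypothesis HL0 : 0 <= L.
Hypothesis Hpos : forall t, 0 <= t < phi1 -> 0 < Gf p M t.
Hypothesis HL : forall t, 0 <= t <= phi1 -> Gf p M t <= L * (phi1 - t).
Hypothesis Hlow : forall e, 0 < e < phi1 -> exists g, 0 < g /\ forall t, 0 <= t <= phi1 - e -> g <= Gf p M t.

Lemma y_decr r : 0 <= r -> y r <= y 0.
Proof.
  intros Hr. assert (H := incr_deriv (fun t => - y t) (fun t => phi t * exp ((bb p - 1) * y t)) 0 r Hr).
  cut (- y 0 <= - y r); [lra|]. apply H.
  - intros t Ht. replace (phi t * exp ((bb p - 1) * y t)) with (- (- phi t * exp ((bb p - 1) * y t))) by ring.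
    apply (is_derive_opp y). apply Hy; lra.
  - intros t Ht. apply continuity_pt_opp, Hcy; lra.
  - intros t Ht. apply Rmult_le_pos; [apply Rlt_le, Hphipos; lra| apply Rlt_le, exp_pos].
Qed.

Lemma barrier r : 0 <= r -> phi r < phi1.
Proof.
  intros Hr.
  destruct (Req_dec r 0) as [-> | Hr0]; [rewrite Hphi0; lra|].
  cut (phi r - phi1 < 0); [lra|].
  apply (cont_ind (fun r => phi r - phi1) 0); [| | |lra].
  - intros t Ht. apply continuity_pt_minus. apply Hcphi; lra. apply continuity_pt_const; intros ??; reflexivity.
  - destruct (cont_eps phi 0 (Hcphi 0 (Rle_refl 0)) phi1 Hphi1) as [d [Hd Hdd]].
    exists d; split; auto. intros t Ht. specialize (Hdd t). rewrite Hphi0, Rminus_0_r in Hdd.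
    rewrite Rminus_0_r, Rabs_right in Hdd by lra. specialize (Hdd ltac:(lra)).
    apply Rabs_def2 in Hdd. lra.
  - intros r1 Hr1 Hz Hbelow. cbv beta in Hz, Hbelow.
    set (C := L * exp ((bb p - 1) * y 0)).
    assert (HC : 0 <= C) by (unfold C; apply Rmult_le_pos; [auto| apply Rlt_le, exp_pos]).
    set (D := fun t => ln (phi1 - phi t)).
    assert (HD : forall t, 0 < t < r1 -> is_derive D t (- (exp ((bb p - 1) * y t) * Gf p M (phi t)) / (phi1 - phi t))).
    { intros t Ht. apply (is_derive_ln_comp (fun t => phi1 - phi t)).
      - specialize (Hbelow t Ht). lra.
      - apply is_derive_cminus. apply Hphi; lra. }
    set (h := r1 / 2).
    assert (Hlow' : forall t, h <= t < r1 -> D h - C * r1 <= D t).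
    { intros t Ht.
      assert (Hc := cmp_deriv (fun s => - C * s) D (fun _ => - C)
        (fun t => - (exp ((bb p - 1) * y t) * Gf p M (phi t)) / (phi1 - phi t)) h t (proj1 Ht)).
      assert (- C * t - - C * h <= D t - D h); [|unfold h in *; nra].
      apply Hc.
      - intros s Hs. auto_derive; auto; ring.
      - intros s Hs. apply HD; unfold h in *; lra.
      - intros s Hs. apply continuity_pt_mult. apply continuity_pt_const; intros ??; reflexivity.
        apply derivable_continuous_pt, derivable_pt_id.
      - intros s Hs. apply (is_derive_cont D s _ (HD s ltac:(unfold h in *; lra))).
      - intros s Hs. assert (Hb := Hbelow s ltac:(unfold h in *; lra)).
        assert (Hps := Hphipos s ltac:(unfold h in *; lra)).
        assert (HLs := HL (phi s) ltac:(lra)).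
        assert (Hys := y_decr s ltac:(unfold h in *; lra)).
        assert (He : exp ((bb p - 1) * y s) <= exp ((bb p - 1) * y 0)).
        { apply exp_le_mono. pose proof b1pos. nra. }
        assert (0 < exp ((bb p - 1) * y s)) by apply exp_pos.
        assert (Gf p M (phi s) / (phi1 - phi s) <= L).
        { apply (Rmult_le_reg_r (phi1 - phi s)); [lra|]. unfold Rdiv. rewrite Rmult_assoc, Rinv_l, Rmult_1_r by lra. lra. }
        assert (0 <= Gf p M (phi s)) by (apply Rlt_le, Hpos; lra).
        assert (0 <= Gf p M (phi s) / (phi1 - phi s)) by (apply Rdiv_le_0_compat; lra).
        replace (- (exp ((bb p - 1) * y s) * Gf p M (phi s)) / (phi1 - phi s))
          with (- (exp ((bb p - 1) * y s) * (Gf p M (phi s) / (phi1 - phi s)))) by (field; lra).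
        unfold C. assert (exp ((bb p - 1) * y s) * (Gf p M (phi s) / (phi1 - phi s)) <= exp ((bb p - 1) * y 0) * L).
        { apply Rmult_le_compat; lra. }
        lra. }
    set (ka := exp (D h - C * r1)). assert (Hka : 0 < ka) by apply exp_pos.
    destruct (cont_eps phi r1 (Hcphi r1 ltac:(lra)) ka Hka) as [d [Hd Hdd]].
    set (t := Rmax h (r1 - d / 2)).
    assert (Ht1 : h <= t) by apply Rmax_l. assert (Ht2 : r1 - d / 2 <= t) by apply Rmax_r.
    assert (Ht3 : t < r1) by (unfold t; apply Rmax_case; unfold h; lra).
    specialize (Hdd t ltac:(rewrite Rabs_left by lra; lra)).
    assert (Hphir1 : phi r1 = phi1) by lra. rewrite Hphir1 in Hdd.
    specialize (Hlow' t ltac:(lra)).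
    apply exp_le_mono in Hlow'. fold ka in Hlow'.
    assert (ED : exp (D t) = phi1 - phi t).
    { unfold D. apply exp_ln. assert (Hb := Hbelow t ltac:(unfold h in *; lra)); lra. }
    rewrite ED in Hlow'. apply Rabs_def2 in Hdd. lra.
Qed.

Lemma conv : forall e, 0 < e -> exists R0, forall r, R0 < r -> Rabs (phi r - phi1) < e.
Proof.
  intros e He. set (e' := Rmin e (phi1 / 2)).
  assert (He' : 0 < e' <= e /\ e' < phi1).
  { unfold e'. split; [split|]. apply Rmin_case; lra. apply Rmin_l.
    eapply Rle_lt_trans; [apply Rmin_r| lra]. }
  destruct (classic (forall r, 1 <= r -> phi r <= phi1 - e')) as [Hall|Hex].
  - exfalso. destruct (Hlow e' ltac:(lra)) as [g [Hg Hgg]].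
    apply (T1 1 phi1 g); try lra. intros r Hr. split. specialize (Hall r Hr); lra.
    apply Hgg. split. apply Rlt_le, Hphipos; lra. apply Hall; auto.
  - apply not_all_ex_not in Hex. destruct Hex as [r0 Hr0].
    apply imply_to_and in Hr0. destruct Hr0 as [Hr0 Hr0'].
    exists r0. intros r Hr.
    assert (phi r0 <= phi r).
    { apply phi_incr; [lra|]. intros x Hx. apply Rlt_le, Hpos. split.
      apply Rlt_le, Hphipos; lra. apply barrier; lra. }
    assert (phi r < phi1) by (apply barrier; lra).
    rewrite Rabs_left by lra. lra.
Qed.
End RootCase.
End Traj.

Lemma eq_at_0 (f g : R -> R) : continuity_pt f 0 -> continuity_pt g 0 ->
  (forall r, 0 < r -> f r = g r) -> f 0 = g 0.
Proof.
  intros Hf Hg H. destruct (Req_dec (f 0) (g 0)) as [E|Hne]; auto. exfalso.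
  set (d := Rabs (f 0 - g 0)). assert (Hd : 0 < d) by (apply Rabs_pos_lt; lra).
  destruct (cont_eps f 0 Hf (d / 2) ltac:(lra)) as [d1 [Hd1 H1]].
  destruct (cont_eps g 0 Hg (d / 2) ltac:(lra)) as [d2 [Hd2 H2]].
  set (r := Rmin d1 d2 / 2). assert (Hr : 0 < r /\ r < d1 /\ r < d2).
  { unfold r. pose proof (Rmin_l d1 d2). pose proof (Rmin_r d1 d2).
    assert (0 < Rmin d1 d2) by (apply Rmin_case; lra). lra. }
  specialize (H1 r ltac:(rewrite Rminus_0_r, Rabs_right; lra)).
  specialize (H2 r ltac:(rewrite Rminus_0_r, Rabs_right; lra)).
  rewrite (H r ltac:(lra)) in H1.
  assert (Rabs (f 0 - g 0) <= Rabs (g r - f 0) + Rabs (g r - g 0)).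
  { replace (f 0 - g 0) with (- (g r - f 0) + (g r - g 0)) by ring.
    eapply Rle_trans; [apply Rabs_triang|]. rewrite Rabs_Ropp; lra. }
  fold d in H0. lra.
Qed.

Lemma gronwall (E dE : R -> R) C x y : x <= y -> 0 <= C ->
  (forall t, x <= t <= y -> is_derive E t (dE t)) ->
  (forall t, x <= t <= y -> 0 <= E t) ->
  (forall t, x <= t <= y -> Rabs (dE t) <= C * E t) ->
  (E x = 0 -> E y = 0) /\ (E y = 0 -> E x = 0).
Proof.
  intros Hxy HC Hd Hp Hb. split.
  - intros H0. assert (Hm := incr_deriv_closed (fun t => - (E t * exp (- C * t)))
       (fun t => - (dE t * exp (- C * t) + E t * (- C * exp (- C * t)))) x y Hxy).
    cbv beta in Hm. rewrite H0, Rmult_0_l in Hm.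
    assert (- (E y * exp (- C * y)) >= 0).
    { apply Rle_ge. replace 0 with (- 0) by ring. apply Hm.
      - intros t Ht. apply d_opp.
        apply (d_eq _ _ (dE t * exp (- C * t) + E t * (- C * exp (- C * t)))); [ring|].
        apply (d_mult E (fun t => exp (- C * t))). apply Hd; auto. auto_derive; auto; ring.
      - intros t Ht. specialize (Hb t Ht). specialize (Hp t Ht).
        assert (0 < exp (- C * t)) by apply exp_pos. apply Rabs_def2b in Hb. nra. }
    assert (0 < exp (- C * y)) by apply exp_pos. specialize (Hp y ltac:(lra)). nra.
  - intros H0. assert (Hm := incr_deriv_closed (fun t => E t * exp (C * t))
       (fun t => dE t * exp (C * t) + E t * (C * exp (C * t))) x y Hxy).
    cbv beta in Hm. rewrite H0, Rmult_0_l in Hm.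
    assert (E x * exp (C * x) <= 0).
    { apply Hm.
      - intros t Ht. apply (d_eq _ _ (dE t * exp (C * t) + E t * (C * exp (C * t)))); [ring|].
        apply (d_mult E (fun t => exp (C * t))). apply Hd; auto. auto_derive; auto; ring.
      - intros t Ht. specialize (Hb t Ht). specialize (Hp t Ht).
        assert (0 < exp (C * t)) by apply exp_pos. apply Rabs_def2b in Hb. nra. }
    assert (0 < exp (C * x)) by apply exp_pos. specialize (Hp x ltac:(lra)). nra.
Qed.

Lemma pw_absorb x c : 0 <= x -> x * pw x c = pw x (c - 1) * (x * x).
Proof.
  intros Hx. destruct (Req_dec x 0) as [-> | Hne].
  - rewrite !pw_npos by lra. ring.
  - rewrite !pw_pos by lra. replace (c * ln x) with ((c - 1) * ln x + ln x) by ring.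
    rewrite exp_plus, exp_ln by lra. ring.
Qed.

Section GS.
Variables (p M : R) (u : R -> R).
Hypothesis hp : 1 < p.
Hypothesis Hgs : is_ground_state p M u.

Lemma du r : is_derive u r (Derive u r).
Proof. apply Derive_correct. apply (proj1 Hgs r). Qed.
Lemma du1 r : is_derive (Derive u) r (Derive (Derive u) r).
Proof. apply Derive_correct. apply (proj1 (proj2 (proj1 Hgs r))). Qed.
Lemma cu r : continuity_pt u r.
Proof. exact (is_derive_cont _ _ _ (du r)). Qed.
Lemma cu1 r : continuity_pt (Derive u) r.
Proof. exact (is_derive_cont _ _ _ (du1 r)). Qed.
Lemma cu2 r : continuity_pt (Derive (Derive u)) r.
Proof. apply continuity_pt_filterlim. apply (proj2 (proj2 (proj1 Hgs r))). Qed.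
Lemma unn r : 0 <= r -> 0 <= u r.
Proof. apply (proj1 (proj2 (proj2 Hgs))). Qed.

Lemma ode r : 0 <= r -> - Derive (Derive u) r =
  pw (Rabs (u r)) (p - 1) * u r + M * pw (Rabs (Derive u r)) (qq p).
Proof.
  intros Hr. destruct (Req_dec r 0) as [-> | Hne].
  - apply (eq_at_0 (fun r => - Derive (Derive u) r)
      (fun r => pw (Rabs (u r)) (p - 1) * u r + M * pw (Rabs (Derive u r)) (qq p))).
    + apply continuity_pt_opp, cu2.
    + apply continuity_pt_plus. apply continuity_pt_mult.
      apply (continuity_pt_comp u (fun x => pw (Rabs x) (p - 1))). apply cu. apply pw_abs_cont; lra.
      apply cu. apply continuity_pt_mult. apply continuity_pt_const; intros ??; reflexivity.
      apply (continuity_pt_comp (Derive u) (fun x => pw (Rabs x) (qq p))). apply cu1.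
      apply pw_abs_cont. pose proof (q_gt1 p hp); lra.
    + intros t Ht. apply (proj2 (proj2 (proj2 (proj2 Hgs))) t Ht).
  - apply (proj2 (proj2 (proj2 (proj2 Hgs))) r). lra.
Qed.

Definition En r := Derive u r * Derive u r + u r * u r.
Definition dEn r := 2 * Derive u r * Derive (Derive u) r + 2 * u r * Derive u r.

Lemma En_deriv r : is_derive En r (dEn r).
Proof.
  unfold En, dEn. apply (d_eq _ _ ((Derive (Derive u) r * Derive u r + Derive u r * Derive (Derive u) r)
     + (Derive u r * u r + u r * Derive u r))); [ring|].
  apply (d_plus (fun r => Derive u r * Derive u r) (fun r => u r * u r)).
  apply (d_mult (Derive u) (Derive u)); apply du1.
  apply (d_mult u u); apply du.
Qed.

Lemma En_ge0 r : 0 <= En r.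
Proof. unfold En. nra. Qed.

Lemma En_bound R0 : 0 <= R0 -> exists C, 0 <= C /\ forall t, 0 <= t <= R0 -> Rabs (dEn t) <= C * En t.
Proof.
  intros HR0.
  destruct (continuity_ab_maj (fun t => Rabs (u t) + Rabs (Derive u t)) 0 R0 HR0) as [mx [Hmx Hmx0]].
  { intros c Hc. apply continuity_pt_plus; apply (continuity_pt_comp _ Rabs); try apply Rcontinuity_abs; [apply cu|apply cu1]. }
  set (K := Rabs (u mx) + Rabs (Derive u mx)).
  assert (HK : 0 <= K) by (unfold K; pose proof (Rabs_pos (u mx)); pose proof (Rabs_pos (Derive u mx)); lra).
  pose proof (q_gt1 p hp) as Hq.
  exists (1 + pw K (p - 1) + 2 * Rabs M * pw K (qq p - 1)). split.
  { pose proof (pw_ge0 K (p - 1)). pose proof (pw_ge0 K (qq p - 1)). pose proof (Rabs_pos M).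
    assert (0 <= Rabs M * pw K (qq p - 1)) by (apply Rmult_le_pos; lra). lra. }
  intros t Ht. specialize (Hmx t Ht). cbv beta in Hmx. fold K in Hmx.
  assert (HU : 0 <= u t) by (apply unn; lra).
  set (U := u t) in *. set (V := Derive u t) in *.
  assert (HUK : U <= K) by (rewrite Rabs_right in Hmx by lra; pose proof (Rabs_pos V); lra).
  assert (HVK : Rabs V <= K) by (pose proof (Rabs_pos U); lra).
  assert (HW := ode t ltac:(lra)). fold U V in HW. rewrite (Rabs_right U) in HW by lra.
  unfold dEn, En. fold U V.
  replace (Derive (Derive u) t) with (- (pw U (p - 1) * U + M * pw (Rabs V) (qq p))) by lra.
  replace (2 * V * - (pw U (p - 1) * U + M * pw (Rabs V) (qq p)) + 2 * U * V) with
    (2 * V * U - 2 * V * (pw U (p - 1) * U) - 2 * M * (V * pw (Rabs V) (qq p))) by ring.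
  assert (HA : Rabs (V * pw (Rabs V) (qq p)) = pw (Rabs V) (qq p - 1) * (V * V)).
  { rewrite Rabs_mult, (Rabs_right (pw _ _)) by (apply Rle_ge, pw_ge0).
    rewrite pw_absorb by apply Rabs_pos. rewrite <- Rabs_mult, (Rabs_right (V * V)) by nra. reflexivity. }
  assert (Hp1 : pw U (p - 1) <= pw K (p - 1)) by (apply pw_le_mono; lra).
  assert (Hq1 : pw (Rabs V) (qq p - 1) <= pw K (qq p - 1)) by (apply pw_le_mono; [lra| split; [apply Rabs_pos|auto]]).
  assert (H2 : Rabs (2 * V * U) <= V * V + U * U).
  { rewrite !Rabs_mult, (Rabs_right 2), (Rabs_right U) by lra.
    assert (Rabs V * Rabs V = V * V) by (rewrite <- Rabs_mult; apply Rabs_right; nra).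
    assert (0 <= (Rabs V - U) * (Rabs V - U)) by exact (Rle_0_sqr (Rabs V - U)).
    nra. }
  set (E := V * V + U * U).
  assert (HV2 : V * V <= E) by (unfold E; nra).
  eapply Rle_trans; [apply Rabs_triang|].
  eapply Rle_trans; [apply Rplus_le_compat_r, Rabs_triang|].
  rewrite !Rabs_Ropp.
  assert (H3 : Rabs (2 * V * (pw U (p - 1) * U)) <= pw K (p - 1) * E).
  { replace (2 * V * (pw U (p - 1) * U)) with (pw U (p - 1) * (2 * V * U)) by ring.
    rewrite Rabs_mult, (Rabs_right (pw _ _)) by (apply Rle_ge, pw_ge0).
    apply Rmult_le_compat; try apply pw_ge0; try apply Rabs_pos; auto. }
  assert (H4 : Rabs (2 * M * (V * pw (Rabs V) (qq p))) <= 2 * Rabs M * (pw K (qq p - 1) * E)).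
  { rewrite Rabs_mult, HA, Rabs_mult, (Rabs_right 2) by lra.
    apply Rmult_le_compat_l. pose proof (Rabs_pos M); lra.
    apply Rmult_le_compat; try apply pw_ge0; try nra; auto. }
  fold E in H2. nra.
Qed.

Lemma En_zero_prop x y : 0 <= x <= y -> (En x = 0 -> En y = 0) /\ (En y = 0 -> En x = 0).
Proof.
  intros Hxy. destruct (En_bound y ltac:(lra)) as [C [HC HCb]].
  apply (gronwall En dEn C x y); try lra.
  - intros t Ht. apply En_deriv.
  - intros t Ht. apply En_ge0.
  - intros t Ht. apply HCb. lra.
Qed.

Lemma En_zero_u r : En r = 0 -> u r = 0.
Proof. unfold En. intros H. nra. Qed.

Lemma u0_pos : 0 < u 0.
Proof.
  destruct (Rle_lt_or_eq_dec 0 (u 0) (unn 0 (Rle_refl 0))) as [H|H]; auto. exfalso.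
  destruct (proj1 (proj2 (proj2 (proj2 Hgs)))) as [r [Hr Hur]].
  assert (E0 : En 0 = 0).
  { unfold En. rewrite (proj1 (proj2 Hgs)), <- H. ring. }
  apply Hur. apply En_zero_u. apply (proj1 (En_zero_prop 0 r ltac:(lra)) E0).
Qed.

Lemma u_pos r : 0 <= r -> 0 < u r.
Proof.
  intros Hr. destruct (Rle_lt_or_eq_dec 0 (u r) (unn r Hr)) as [H|H]; auto. exfalso.
  destruct (Req_dec r 0) as [-> | Hr0]. pose proof u0_pos; lra.
  assert (Hd : Derive u r = 0).
  { assert (pr : derivable_pt u r) by (exists (Derive u r); apply is_derive_Reals, du).
    assert (H0 := deriv_minimum u 0 (r + 1) r pr ltac:(lra) ltac:(lra)).
    rewrite <- H0. 2:{ intros x Hx1 Hx2. rewrite <- H. apply unn; lra. }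
    destruct pr as [l Hl]. simpl. apply (uniqueness_limite u r); auto.
    apply is_derive_Reals, du. }
  assert (Er : En r = 0) by (unfold En; rewrite Hd, <- H; ring).
  pose proof u0_pos. assert (u 0 = 0); [|lra].
  apply En_zero_u. apply (proj2 (En_zero_prop 0 r ltac:(lra)) Er).
Qed.

Lemma u1_neg r : 0 < r -> Derive u r < 0.
Proof.
  intros Hr. apply (cont_ind (Derive u) 0); auto.
  - intros t Ht. apply cu1.
  - assert (H0 := ode 0 (Rle_refl 0)). rewrite (proj1 (proj2 Hgs)), Rabs_R0, (pw_npos 0) in H0 by lra.
    pose proof u0_pos. rewrite Rabs_right in H0 by lra. rewrite pw_pos in H0 by lra.
    assert (Hneg : Derive (Derive u) 0 < 0).
    { assert (0 < exp ((p - 1) * ln (u 0)) * u 0) by (apply Rmult_lt_0_compat; [apply exp_pos|lra]). lra. }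
    destruct (deriv_neg_local (Derive u) 0 _ (du1 0) Hneg) as [d [Hd [Hd1 _]]].
    exists d; split; auto. intros t Ht. rewrite <- (proj1 (proj2 Hgs)). apply Hd1. lra.
  - intros r1 Hr1 Hz Hbelow.
    assert (H0 := ode r1 ltac:(lra)). rewrite Hz, Rabs_R0, (pw_npos 0) in H0 by lra.
    assert (Hu := u_pos r1 ltac:(lra)). rewrite Rabs_right in H0 by lra. rewrite pw_pos in H0 by lra.
    assert (Hneg : Derive (Derive u) r1 < 0).
    { assert (0 < exp ((p - 1) * ln (u r1)) * u r1) by (apply Rmult_lt_0_compat; [apply exp_pos|lra]). lra. }
    destruct (deriv_neg_local (Derive u) r1 _ (du1 r1) Hneg) as [d [Hd [_ Hd2]]].
    set (t := Rmax (r1 - d / 2) (r1 / 2)).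
    assert (Ht : r1 - d / 2 <= t /\ r1 / 2 <= t /\ t < r1).
    { unfold t. split; [apply Rmax_l|split; [apply Rmax_r|apply Rmax_case; lra]]. }
    specialize (Hd2 t ltac:(lra)). specialize (Hbelow t ltac:(lra)). lra.
Qed.

Definition ys r := ln (u r).
Definition phs r := - Derive u r * exp (- bb p * ln (u r)).

Lemma ys_deriv r : 0 < r -> is_derive ys r (- phs r * exp ((bb p - 1) * ys r)).
Proof.
  intros Hr. assert (Hu := u_pos r ltac:(lra)).
  apply (d_eq _ _ (Derive u r / u r)).
  - unfold phs, ys. replace (- (- Derive u r * exp (- bb p * ln (u r))) * exp ((bb p - 1) * ln (u r)))
      with (Derive u r * (exp (- bb p * ln (u r)) * exp ((bb p - 1) * ln (u r)))) by ring.
    rewrite <- exp_plus. replace (- bb p * ln (u r) + (bb p - 1) * ln (u r)) with (- ln (u r)) by ring.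
    rewrite exp_Ropp, exp_ln by lra. unfold Rdiv; ring.
  - apply is_derive_ln_comp; auto. apply du.
Qed.

Lemma phs_deriv r : 0 < r -> is_derive phs r (exp ((bb p - 1) * ys r) * Gf p M (phs r)).
Proof.
  intros Hr. assert (HU := u_pos r ltac:(lra)). assert (HV := u1_neg r Hr).
  assert (Hd := d_mult (fun r => - Derive u r) (fun r => exp (- bb p * ln (u r))) r
     (- Derive (Derive u) r) (- bb p * (Derive u r / u r) * exp (- bb p * ln (u r)))
     (d_opp _ _ _ (du1 r)) (is_derive_exp_comp (fun r => ln (u r)) r _ (- bb p) (is_derive_ln_comp u r _ HU (du r)))).
  cbv beta in Hd. unfold phs. eapply d_eq; [|exact Hd].
  fold (phs r). unfold ys.
  set (L := ln (u r)) in *. set (U := u r) in *. set (V := Derive u r) in *. set (ph := phs r) in *.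
  set (A := exp ((bb p - 1) * L)) in *.
  assert (HUe : U = exp L) by (unfold L, U; rewrite exp_ln; auto).
  assert (HA : 0 < A) by apply exp_pos.
  assert (HAU : 0 < A * U) by (apply Rmult_lt_0_compat; lra).
  assert (Hbl : exp (- bb p * L) = / (A * U)).
  { rewrite HUe. unfold A. rewrite <- exp_plus, <- exp_Ropp. f_equal. ring. }
  assert (Hph0 : ph = - V * exp (- bb p * L)) by reflexivity.
  assert (Hph : ph = - V / (A * U)) by (rewrite Hph0, Hbl; field; lra).
  assert (Hphp : 0 < ph) by (rewrite Hph; apply Rdiv_lt_0_compat; lra).
  assert (HV2 : - V = ph * (A * U)) by (rewrite Hph; field; lra).
  assert (Hode := ode r ltac:(lra)). fold U V in Hode.
  rewrite (Rabs_right U) in Hode by lra. rewrite (Rabs_left V) in Hode by lra.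
  rewrite HV2 in Hode.
  rewrite (pw_mul ph (A * U) (qq p)) in Hode by (try apply Rmult_lt_0_compat; lra).
  assert (E1 : exp (qq p * ln (A * U)) = A * A * U).
  { assert (EAU : A * U = exp (bb p * L)) by (rewrite HUe; unfold A; rewrite <- exp_plus; f_equal; ring).
    assert (EAAU : A * A * U = exp (p * L)) by (rewrite HUe; unfold A; rewrite <- !exp_plus; f_equal; unfold bb; field).
    rewrite EAAU, EAU, ln_exp. f_equal. rewrite <- Rmult_assoc, (Rmult_comm (qq p)), bq_p; auto. }
  assert (E2 : pw U (p - 1) = A * A).
  { rewrite pw_pos by lra. unfold A. rewrite <- exp_plus. f_equal. fold L. unfold bb; field. }
  rewrite E1, E2 in Hode.
  unfold Gf. rewrite (Rabs_right ph) by lra. rewrite Hbl.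
  replace (- Derive (Derive u) r) with (A * A * U + M * (pw ph (qq p) * (A * A * U))) by lra.
  replace (- bb p * (V / U) * / (A * U)) with (bb p * (- V) / (U * (A * U))) by (field; lra).
  rewrite HV2. field. lra.
Qed.

Lemma ys_cont r : 0 <= r -> continuity_pt ys r.
Proof.
  intros Hr. unfold ys. apply (continuity_pt_comp u ln). apply cu.
  apply derivable_continuous_pt. exists (/ u r). apply derivable_pt_lim_ln. apply u_pos; auto.
Qed.

Lemma phs_cont r : 0 <= r -> continuity_pt phs r.
Proof.
  intros Hr. unfold phs. apply continuity_pt_mult. apply continuity_pt_opp, cu1.
  apply (continuity_pt_comp (fun r => - bb p * ln (u r)) exp).
  apply continuity_pt_mult. apply continuity_pt_const; intros ??; reflexivity. apply ys_cont; auto.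
  apply derivable_continuous_pt, derivable_pt_exp.
Qed.

Lemma phs_0 : phs 0 = 0.
Proof. unfold phs. rewrite (proj1 (proj2 Hgs)). ring. Qed.

Lemma phs_pos r : 0 < r -> 0 < phs r.
Proof. intros Hr. unfold phs. pose proof (u1_neg r Hr). pose proof (exp_pos (- bb p * ln (u r))). nra. Qed.

Lemma gs_M : M <= - mu_star p.
Proof.
  destruct (Rle_lt_dec M (- mu_star p)) as [H|H]; auto. exfalso.
  destruct (root0 p M hp H) as [g [Hg HG]].
  apply (no_root p M ys phs hp) with (g := g);
    first [exact ys_deriv| exact phs_deriv| exact ys_cont | exact phs_cont | exact phs_0 | exact phs_pos | exact Hg | exact HG].
Qed.

Lemma gs_asym : exists X2, is_X2 p M X2 /\ equiv_infty u (U_of p X2).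
Proof.
  pose proof gs_M as HM.
  destruct (root1 p M hp HM) as [phi1 [H1 [H1s [G1 Hpos]]]].
  exists (Xof p phi1). split. apply X2_of; auto.
  assert (HL : forall t, 0 <= t <= phi1 -> Gf p M t <= Lip p M phi1 * (phi1 - t)).
  { intros t Ht. assert (H := G_lip p M hp t phi1 phi1 Ht ltac:(lra)). rewrite G1, Rminus_0_r in H.
    rewrite (Rabs_left1 (t - phi1)) in H by lra. replace (- (t - phi1)) with (phi1 - t) in H by ring.
    apply Rabs_def2b in H. lra. }
  assert (Hlow : forall e, 0 < e < phi1 -> exists g, 0 < g /\ forall t, 0 <= t <= phi1 - e -> g <= Gf p M t).
  { intros e He. exists (Gf p M (phi1 - e)). split. apply Hpos; lra.
    intros t Ht. destruct (Req_dec t (phi1 - e)) as [-> | Hne]; [lra|].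
    apply Rlt_le, (G_decr p M hp); try lra. apply (M_neg_of_le p M hp); auto. }
  assert (Hconv : forall e, 0 < e -> exists R0, forall r, R0 < r -> Rabs (phs r - phi1) < e).
  { apply (conv p M ys phs hp) with (L := Lip p M phi1);
    first [exact ys_deriv| exact phs_deriv| exact ys_cont | exact phs_cont | exact phs_0 | exact phs_pos
          | exact H1 | exact (Lip_pos p M hp phi1 ltac:(lra)) | exact Hpos | exact HL | exact Hlow]. }
  assert (Ha := asym_inf p hp ys phs 0 phi1 H1 ys_deriv Hconv).
  unfold equiv_infty. eapply is_lim_ext_loc; [|exact Ha].
  exists 0. intros r Hr. unfold ys. rewrite exp_ln; auto. apply u_pos; lra.
Qed.
End GS.

Section Build.
Variables (p M : R) (Psi phi : R -> R) (I : R -> Prop).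
Hypothesis hp : 1 < p.
Hypothesis HI : forall r, I r -> exists d, 0 < d /\ forall s, Rabs (s - r) < d -> I s.
Hypothesis Hphi : forall r, I r -> is_derive phi r (exp (- (bb p - 1) * Psi (phi r)) * Gf p M (phi r)).
Hypothesis HPsi : forall r, I r -> is_derive Psi (phi r) (phi r / Gf p M (phi r)).
Hypothesis HG : forall r, I r -> Gf p M (phi r) <> 0.

Definition ub r := exp (- Psi (phi r)).
Definition ub1 r := - phi r * exp (- bb p * Psi (phi r)).
Definition ub2 r := - exp (- p * Psi (phi r)) * (1 + M * pw (Rabs (phi r)) (qq p)).

Lemma PsiPhi_d r : I r -> is_derive (fun r => Psi (phi r)) r (exp (- (bb p - 1) * Psi (phi r)) * phi r).
Proof.
  intros Hr. eapply d_eq; [|apply (d_comp Psi phi r _ _ (HPsi r Hr) (Hphi r Hr))].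
  specialize (HG r Hr). field. auto.
Qed.

Lemma ub_d r : I r -> is_derive ub r (ub1 r).
Proof.
  intros Hr. unfold ub, ub1.
  apply (d_ext (fun r => exp (-1 * Psi (phi r)))). { intros t. f_equal. ring. }
  eapply d_eq; [|apply (is_derive_exp_comp (fun r => Psi (phi r)) r _ (-1) (PsiPhi_d r Hr))].
  replace (- bb p * Psi (phi r)) with (- (bb p - 1) * Psi (phi r) + -1 * Psi (phi r)) by ring.
  rewrite exp_plus. ring.
Qed.

Lemma ub_d' r : I r -> is_derive (fun r => exp (- Psi (phi r))) r (ub1 r).
Proof. apply ub_d. Qed.

Lemma ub1_d r : I r -> is_derive ub1 r (ub2 r).
Proof.
  intros Hr. unfold ub1, ub2.
  assert (H1 := d_opp _ _ _ (Hphi r Hr)).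
  assert (H2 := is_derive_exp_comp (fun r => Psi (phi r)) r _ (- bb p) (PsiPhi_d r Hr)).
  eapply d_eq; [|apply (d_mult (fun r => - phi r) (fun r => exp (- bb p * Psi (phi r))) r _ _ H1 H2)].
  cbv beta. specialize (HG r Hr).
  set (P := Psi (phi r)). set (f := phi r). set (G := Gf p M f).
  assert (E1 : exp (- (bb p - 1) * P) * exp (- bb p * P) = exp (- p * P)).
  { rewrite <- exp_plus. f_equal. unfold bb. field. }
  assert (EG : G = 1 + bb p * f ^ 2 + M * pw (Rabs f) (qq p)) by reflexivity.
  transitivity (- (exp (- (bb p - 1) * P) * exp (- bb p * P)) * (G - bb p * f ^ 2)); [ring|].
  rewrite E1, EG. ring.
Qed.

Lemma Dub r : I r -> Derive ub r = ub1 r.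
Proof. intros Hr. apply is_derive_unique, ub_d; auto. Qed.

Lemma DDub_d r : I r -> is_derive (Derive ub) r (ub2 r).
Proof.
  intros Hr. apply (is_derive_ext_loc ub1).
  - destruct (HI r Hr) as [d [Hd Hs]]. exists (mkposreal d Hd). intros s Hs'.
    apply ball_R in Hs'. simpl in Hs'. symmetry. apply Dub, Hs; auto.
  - apply ub1_d; auto.
Qed.

Lemma ub2_cont r : I r -> continuity_pt ub2 r.
Proof.
  intros Hr. pose proof (q_gt1 p hp).
  assert (Hc : continuity_pt phi r) by (apply (is_derive_cont _ _ _ (Hphi r Hr))).
  assert (HcP : continuity_pt (fun r => Psi (phi r)) r) by (apply (is_derive_cont _ _ _ (PsiPhi_d r Hr))).
  unfold ub2. apply continuity_pt_mult.
  - apply continuity_pt_opp. apply (continuity_pt_comp (fun r => - p * Psi (phi r)) exp).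
    apply continuity_pt_mult. apply continuity_pt_const; intros ??; reflexivity. exact HcP.
    apply derivable_continuous_pt, derivable_pt_exp.
  - apply continuity_pt_plus. apply continuity_pt_const; intros ??; reflexivity.
    apply continuity_pt_mult. apply continuity_pt_const; intros ??; reflexivity.
    apply (continuity_pt_comp phi (fun x => pw (Rabs x) (qq p))); auto. apply pw_abs_cont; lra.
Qed.

Lemma build_C2 r : I r -> C2_at ub r.
Proof.
  intros Hr. split; [|split].
  - exists (ub1 r). apply ub_d; auto.
  - exists (ub2 r). apply DDub_d; auto.
  - apply continuity_pt_filterlim.
    apply (continuity_pt_ext_loc ub2).
    + destruct (HI r Hr) as [d [Hd Hs]]. exists (mkposreal d Hd). intros s Hs'.
      apply ball_R in Hs'. simpl in Hs'. symmetry. apply is_derive_unique, DDub_d, Hs; auto.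
    + apply ub2_cont; auto.
Qed.

Lemma build_solves r : I r -> solves_at p M ub r.
Proof.
  intros Hr. unfold solves_at. change (2 * p / (p + 1)) with (qq p).
  rewrite (is_derive_unique _ _ _ (DDub_d r Hr)), Dub by auto.
  unfold ub, ub1, ub2. set (P := Psi (phi r)). set (f := phi r).
  rewrite (Rabs_right (exp (- P))) by (apply Rle_ge, Rlt_le, exp_pos).
  rewrite (pw_pos (exp (- P))) by apply exp_pos. rewrite ln_exp.
  rewrite Rabs_mult, Rabs_Ropp, (Rabs_right (exp _)) by (apply Rle_ge, Rlt_le, exp_pos).
  rewrite pw_mul by (try apply Rabs_pos; apply exp_pos). rewrite ln_exp.
  assert (E1 : exp ((p - 1) * - P) * exp (- P) = exp (- p * P)) by (rewrite <- exp_plus; f_equal; ring).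
  assert (E2 : exp (qq p * (- bb p * P)) = exp (- p * P)).
  { f_equal. replace (qq p * (- bb p * P)) with (- (bb p * qq p) * P) by ring. rewrite (bq_p p hp). ring. }
  rewrite E1, E2. ring.
Qed.
End Build.

Section Inv.
Variables (f df g : R -> R) (al be : R) (J : R -> Prop).
Hypothesis Hd : forall t, al < t < be -> is_derive f t (df t).
Hypothesis Hdp : forall t, al < t < be -> 0 < df t.
Hypothesis Hg : forall y, J y -> al < g y < be /\ f (g y) = y.

Lemma f_sincr s t : al < s -> s < t -> t < be -> f s < f t.
Proof.
  intros H1 H2 H3. apply (sincr_deriv f df s t H2).
  - intros x Hx. apply Hd; lra.
  - intros x Hx. apply (is_derive_cont f x (df x)). apply Hd; lra.
  - intros x Hx. apply Hdp; lra.
Qed.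

Lemma f_incr s t : al < s -> s <= t -> t < be -> f s <= f t.
Proof. intros H1 [H2| ->] H3; [apply Rlt_le, f_sincr; auto| lra]. Qed.

Lemma g_mono y1 y2 : J y1 -> J y2 -> y1 <= y2 -> g y1 <= g y2.
Proof.
  intros J1 J2 H. destruct (Rle_lt_dec (g y1) (g y2)) as [|Hlt]; auto.
  destruct (Hg y1 J1) as [A1 B1]. destruct (Hg y2 J2) as [A2 B2].
  assert (f (g y2) < f (g y1)) by (apply f_sincr; lra). lra.
Qed.

Lemma g_cont y0 : J y0 -> (exists e, 0 < e /\ forall y, Rabs (y - y0) < e -> J y) -> continuity_pt g y0.
Proof.
  intros J0 [e [He HJ]]. apply eps_cont. intros eta Heta.
  destruct (Hg y0 J0) as [[Ha Hb] Hf0].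
  set (e' := Rmin (eta / 2) (Rmin ((g y0 - al) / 2) ((be - g y0) / 2))).
  assert (He' : 0 < e' /\ e' <= eta / 2 /\ e' <= (g y0 - al) / 2 /\ e' <= (be - g y0) / 2).
  { unfold e'. pose proof (Rmin_l (eta / 2) (Rmin ((g y0 - al) / 2) ((be - g y0) / 2))).
    pose proof (Rmin_r (eta / 2) (Rmin ((g y0 - al) / 2) ((be - g y0) / 2))).
    pose proof (Rmin_l ((g y0 - al) / 2) ((be - g y0) / 2)).
    pose proof (Rmin_r ((g y0 - al) / 2) ((be - g y0) / 2)).
    repeat split; try lra. repeat apply Rmin_case; lra. }
  destruct He' as [He1 [He2 [He3 He4]]].
  assert (Hlo : f (g y0 - e') < y0) by (rewrite <- Hf0 at 2; apply f_sincr; lra).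
  assert (Hhi : y0 < f (g y0 + e')) by (rewrite <- Hf0 at 1; apply f_sincr; lra).
  exists (Rmin e (Rmin (y0 - f (g y0 - e')) (f (g y0 + e') - y0))). split.
  { apply Rmin_glb_lt; [lra| apply Rmin_glb_lt; lra]. }
  intros y Hy.
  assert (Hy1 : Rabs (y - y0) < e) by (eapply Rlt_le_trans; [apply Hy| apply Rmin_l]).
  assert (Hy2 : Rabs (y - y0) < Rmin (y0 - f (g y0 - e')) (f (g y0 + e') - y0))
    by (eapply Rlt_le_trans; [apply Hy| apply Rmin_r]).
  assert (Hy3 : Rabs (y - y0) < y0 - f (g y0 - e')) by (eapply Rlt_le_trans; [apply Hy2| apply Rmin_l]).
  assert (Hy4 : Rabs (y - y0) < f (g y0 + e') - y0) by (eapply Rlt_le_trans; [apply Hy2| apply Rmin_r]).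
  apply Rabs_def2 in Hy3. apply Rabs_def2 in Hy4.
  destruct (Hg y (HJ y Hy1)) as [[Ha' Hb'] Hf'].
  assert (g y0 - e' < g y).
  { destruct (Rle_lt_dec (g y) (g y0 - e')) as [Hle|]; auto.
    assert (f (g y) <= f (g y0 - e')) by (apply f_incr; lra). lra. }
  assert (g y < g y0 + e').
  { destruct (Rle_lt_dec (g y0 + e') (g y)) as [Hle|]; auto.
    assert (f (g y0 + e') <= f (g y)) by (apply f_incr; lra). lra. }
  apply Rabs_def1; lra.
Qed.

Lemma inv_deriv y0 : J y0 -> (exists e, 0 < e /\ forall y, Rabs (y - y0) < e -> J y) ->
  is_derive g y0 (/ df (g y0)).
Proof.
  intros J0 [e [He HJ]].
  set (lb := y0 - e / 2). set (ub := y0 + e / 2).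
  assert (Jl : J lb) by (apply HJ; unfold lb; rewrite Rabs_left; lra).
  assert (Ju : J ub) by (apply HJ; unfold ub; rewrite Rabs_right; lra).
  assert (Prf : forall a, g lb <= a <= g ub -> derivable_pt f a).
  { intros a Ha. destruct (Hg lb Jl) as [[? ?] _]. destruct (Hg ub Ju) as [[? ?] _].
    exists (df a). apply is_derive_Reals, Hd; lra. }
  assert (Hinc : g lb <= g y0 <= g ub).
  { split; apply g_mono; auto; unfold lb, ub; lra. }
  assert (Hc : continuity_pt g y0) by (apply g_cont; auto; exists e; auto).
  assert (Hcomp : forall x0, lb <= x0 <= ub -> comp f g x0 = id x0).
  { intros x0 Hx0. unfold comp, id. apply Hg. apply HJ. unfold lb, ub in Hx0. apply Rabs_def1; lra. }
  destruct (Hg y0 J0) as [[Ha Hb] Hf0].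
  assert (Hdv : derive_pt f (g y0) (Prf (g y0) Hinc) = df (g y0)).
  { apply derive_pt_eq_0. apply is_derive_Reals, Hd; lra. }
  assert (Hne : derive_pt f (g y0) (Prf (g y0) Hinc) <> 0) by (rewrite Hdv; pose proof (Hdp (g y0) ltac:(lra)); lra).
  assert (H := Ranalysis5.derivable_pt_lim_recip_interv f g lb ub y0 Prf Hc ltac:(unfold lb, ub; lra)
     ltac:(unfold lb, ub; lra) Hinc Hcomp Hne).
  rewrite Hdv in H. apply is_derive_Reals. replace (/ df (g y0)) with (1 / df (g y0)) by (unfold Rdiv; ring).
  exact H.
Qed.
End Inv.

Lemma ball_R' (t : R) (e : posreal) s : ball t e s -> Rabs (s - t) < e.
Proof. intro H. exact H. Qed.

Lemma ftc (f : R -> R) (c al be : R) : al < c < be ->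
  (forall t, al < t < be -> continuity_pt f t) ->
  forall t, al < t < be -> is_derive (fun x => RInt f c x) t (f t).
Proof.
  intros Hc Hf t Ht.
  apply (is_derive_RInt f (fun x => RInt f c x) c t).
  - assert (Hd : 0 < Rmin (t - al) (be - t)) by (apply Rmin_glb_lt; lra).
    exists (mkposreal _ Hd). intros b0 Hb0. apply ball_R' in Hb0. simpl in Hb0.
    assert (Hb1 : Rabs (b0 - t) < t - al) by (eapply Rlt_le_trans; [apply Hb0| apply Rmin_l]).
    assert (Hb2 : Rabs (b0 - t) < be - t) by (eapply Rlt_le_trans; [apply Hb0| apply Rmin_r]).
    apply Rabs_def2 in Hb1. apply Rabs_def2 in Hb2.
    apply (RInt_correct (V := R_CompleteNormedModule)). apply (ex_RInt_continuous (V := R_CompleteNormedModule)). intros z Hz.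
    apply continuity_pt_filterlim. apply Hf.
    assert (al < Rmin c b0) by (apply Rmin_glb_lt; lra).
    assert (Rmax c b0 < be) by (apply Rmax_lub_lt; lra). lra.
  - apply continuity_pt_filterlim. apply Hf; auto.
Qed.


Lemma inv_exists (f : R -> R) (al be : R) (J : R -> Prop) :
  (forall t, al < t < be -> continuity_pt f t) ->
  (forall y, J y -> exists t1 t2, al < t1 /\ t1 < t2 /\ t2 < be /\ f t1 < y /\ y < f t2) ->
  exists g, forall y, J y -> al < g y < be /\ f (g y) = y.
Proof.
  intros Hc Hs.
  assert (Hex : forall y, exists t, J y -> al < t < be /\ f t = y).
  { intros y. destruct (classic (J y)) as [Jy|nJ].
    - destruct (Hs y Jy) as [t1 [t2 [H1 [H2 [H3 [H4 H5]]]]]].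
      destruct (Ranalysis5.IVT_interv (fun t => f t - y) t1 t2) as [z [Hz Hfz]]; try lra.
      + intros a Ha. apply continuity_pt_minus. apply Hc; lra. apply continuity_pt_const; intros ??; reflexivity.
      + exists z. intros _. split; [lra|]. cbv beta in Hfz. lra.
    - exists 0. intros Jy; contradiction. }
  exists (fun y => proj1_sig (ClassicalEpsilon.constructive_indefinite_description _ (Hex y))).
  intros y Jy. destruct (ClassicalEpsilon.constructive_indefinite_description _ (Hex y)) as [t Ht]. simpl. auto.
Qed.

Lemma Gf_even p M t : Gf p M (- t) = Gf p M t.
Proof. unfold Gf. rewrite Rabs_Ropp. f_equal. f_equal. f_equal. ring. Qed.

Lemma RInt_0 (f : R -> R) a : RInt f a a = 0.
Proof. rewrite RInt_point. reflexivity. Qed.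

Section GSC.
Variables (p M phi1 L : R).
Hypothesis hp : 1 < p.
Hypothesis H1 : 0 < phi1.
Hypothesis HL0 : 0 < L.
Hypothesis Hpos : forall t, 0 <= t < phi1 -> 0 < Gf p M t.
Hypothesis HL : forall t, 0 <= t <= phi1 -> Gf p M t <= L * (phi1 - t).

Lemma Gpos' t : - phi1 < t < phi1 -> 0 < Gf p M t.
Proof.
  intros Ht. destruct (Rle_lt_dec 0 t). apply Hpos; lra.
  rewrite <- Gf_even. apply Hpos; lra.
Qed.

Definition Psi0 := fun x => RInt (fun s => s / Gf p M s) 0 x.

Lemma Psi0_d t : - phi1 < t < phi1 -> is_derive Psi0 t (t / Gf p M t).
Proof.
  intros Ht. apply (ftc (fun s => s / Gf p M s) 0 (- phi1) phi1); [lra| |lra].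
  intros s Hs. apply (continuity_pt_div (fun s => s) (Gf p M)).
  - apply derivable_continuous_pt, derivable_pt_id.
  - apply Gf_cont.
  - pose proof (Gpos' s Hs); lra.
  - pose proof (Gpos' s Hs); lra.
Qed.

Lemma Psi0_nonneg t : - phi1 < t < phi1 -> 0 <= Psi0 t.
Proof.
  intros Ht. assert (E0 : Psi0 0 = 0) by apply RInt_0.
  destruct (Rle_lt_dec 0 t).
  - rewrite <- E0. apply (incr_deriv Psi0 (fun s => s / Gf p M s) 0 t); auto.
    + intros s Hs. apply Psi0_d; lra.
    + intros s Hs. apply (is_derive_cont _ _ _ (Psi0_d s ltac:(lra))).
    + intros s Hs. apply Rdiv_le_0_compat; [lra| apply Gpos'; lra].
  - assert (H := incr_deriv (fun x => - Psi0 x) (fun s => - (s / Gf p M s)) t 0).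
    cbv beta in H. cut (- Psi0 t <= - Psi0 0); [lra|]. apply H; try lra.
    + intros s Hs. apply d_opp, Psi0_d; lra.
    + intros s Hs. apply continuity_pt_opp. apply (is_derive_cont _ _ _ (Psi0_d s ltac:(lra))).
    + intros s Hs. assert (0 < Gf p M s) by (apply Gpos'; lra).
      assert (s / Gf p M s < 0). { unfold Rdiv. assert (0 < / Gf p M s) by (apply Rinv_0_lt_compat; lra). nra. }
      lra.
Qed.

Definition W0 := fun x => RInt (fun s => exp ((bb p - 1) * Psi0 s) / Gf p M s) 0 x.

Lemma W0_d t : - phi1 < t < phi1 -> is_derive W0 t (exp ((bb p - 1) * Psi0 t) / Gf p M t).
Proof.
  intros Ht. apply (ftc (fun s => exp ((bb p - 1) * Psi0 s) / Gf p M s) 0 (- phi1) phi1); [lra| |lra].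
  intros s Hs. apply (continuity_pt_div (fun s => exp ((bb p - 1) * Psi0 s)) (Gf p M)).
  - apply (continuity_pt_comp (fun s => (bb p - 1) * Psi0 s) exp).
    apply continuity_pt_mult. apply continuity_pt_const; intros ??; reflexivity.
    apply (is_derive_cont _ _ _ (Psi0_d s Hs)).
    apply derivable_continuous_pt, derivable_pt_exp.
  - apply Gf_cont.
  - pose proof (Gpos' s Hs); lra.
  - pose proof (Gpos' s Hs); lra.
Qed.

Lemma W0_dpos t : - phi1 < t < phi1 -> 0 < exp ((bb p - 1) * Psi0 t) / Gf p M t.
Proof. intros Ht. apply Rdiv_lt_0_compat. apply exp_pos. apply Gpos'; auto. Qed.

Lemma W0_dlow t : - phi1 < t < phi1 -> / (L * (phi1 - Rabs t)) <= exp ((bb p - 1) * Psi0 t) / Gf p M t.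
Proof.
  intros Ht. assert (HG := Gpos' t Ht).
  assert (HGL : Gf p M t <= L * (phi1 - Rabs t)).
  { destruct (Rle_lt_dec 0 t). rewrite Rabs_right by lra. apply HL; lra.
    rewrite Rabs_left by lra. rewrite <- Gf_even. replace (phi1 - - t) with (phi1 - (- t)) by ring. apply HL; lra. }
  assert (He : 1 <= exp ((bb p - 1) * Psi0 t)).
  { apply Rle_trans with (exp 0); [rewrite exp_0; lra|]. apply exp_le_mono. pose proof (Psi0_nonneg t Ht). apply Rmult_le_pos; [unfold bb; lra| auto]. }
  unfold Rdiv. apply Rle_trans with (1 * / Gf p M t).
  - rewrite Rmult_1_l. apply Rinv_le_contravar; auto.
  - apply Rmult_le_compat_r; [apply Rlt_le, Rinv_0_lt_compat|]; lra.
Qed.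

Lemma W0_0 : W0 0 = 0.
Proof. apply RInt_0. Qed.

Lemma W0_cont t : - phi1 < t < phi1 -> continuity_pt W0 t.
Proof. intros Ht. apply (is_derive_cont _ _ _ (W0_d t Ht)). Qed.

Lemma W0_up t : 0 <= t < phi1 -> / L * (ln phi1 - ln (phi1 - t)) <= W0 t.
Proof.
  intros Ht. rewrite <- (Rminus_0_r (W0 t)), <- W0_0.
  replace (/ L * (ln phi1 - ln (phi1 - t))) with ((- / L * ln (phi1 - t)) - (- / L * ln (phi1 - 0))) by (rewrite Rminus_0_r; ring).
  apply (cmp_deriv (fun x => - / L * ln (phi1 - x)) W0 (fun x => / (L * (phi1 - x)))
     (fun x => exp ((bb p - 1) * Psi0 x) / Gf p M x) 0 t); try lra.
  - intros x Hx. auto_derive. lra. field. split; lra.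
  - intros x Hx. apply W0_d; lra.
  - intros x Hx. apply continuity_pt_mult. apply continuity_pt_const; intros ??; reflexivity.
    apply (continuity_pt_comp (fun x => phi1 - x) ln).
    apply continuity_pt_minus. apply continuity_pt_const; intros ??; reflexivity.
    apply derivable_continuous_pt, derivable_pt_id.
    apply derivable_continuous_pt. exists (/ (phi1 - x)). apply derivable_pt_lim_ln. lra.
  - intros x Hx. apply W0_cont; lra.
  - intros x Hx. assert (H := W0_dlow x ltac:(lra)). rewrite Rabs_right in H by lra. exact H.
Qed.

Lemma W0_down t : - phi1 < t <= 0 -> W0 t <= - (/ L * (ln phi1 - ln (phi1 + t))).
Proof.
  intros Ht.
  assert (H : (/ L * ln (phi1 + 0)) - (/ L * ln (phi1 + t)) <= W0 0 - W0 t).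
  { apply (cmp_deriv (fun x => / L * ln (phi1 + x)) W0 (fun x => / (L * (phi1 + x)))
     (fun x => exp ((bb p - 1) * Psi0 x) / Gf p M x) t 0); try lra.
    - intros x Hx. auto_derive. lra. field. split; lra.
    - intros x Hx. apply W0_d; lra.
    - intros x Hx. apply continuity_pt_mult. apply continuity_pt_const; intros ??; reflexivity.
      apply (continuity_pt_comp (fun x => phi1 + x) ln).
      apply continuity_pt_plus. apply continuity_pt_const; intros ??; reflexivity.
      apply derivable_continuous_pt, derivable_pt_id.
      apply derivable_continuous_pt. exists (/ (phi1 + x)). apply derivable_pt_lim_ln. lra.
    - intros x Hx. apply W0_cont; lra.
    - intros x Hx. assert (H := W0_dlow x ltac:(lra)). rewrite Rabs_left in H by lra.
      replace (phi1 - - x) with (phi1 + x) in H by ring. exact H. }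
  rewrite W0_0, Rplus_0_r in H. lra.
Qed.

Lemma W0_surj y : exists t1 t2, - phi1 < t1 /\ t1 < t2 /\ t2 < phi1 /\ W0 t1 < y /\ y < W0 t2.
Proof.
  set (K := Rabs y + 1).
  set (t2 := phi1 * (1 - exp (- L * K))).
  assert (HK : 0 < K) by (unfold K; pose proof (Rabs_pos y); lra).
  assert (He : 0 < exp (- L * K) < 1).
  { split. apply exp_pos. rewrite <- exp_0. apply exp_increasing. nra. }
  assert (Ht2 : 0 < t2 < phi1) by (unfold t2; split; nra).
  assert (Eln : ln phi1 - ln (phi1 - t2) = L * K).
  { replace (phi1 - t2) with (phi1 * exp (- L * K)) by (unfold t2; ring).
    rewrite ln_mult, ln_exp by (auto; apply exp_pos). ring. }
  assert (Eln2 : ln phi1 - ln (phi1 + - t2) = L * K).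
  { replace (phi1 + - t2) with (phi1 - t2) by ring. auto. }
  assert (Hy : y < K) by (unfold K; pose proof (Rle_abs y); lra).
  assert (Hy' : - K < y) by (unfold K; pose proof (Rle_abs (- y)); rewrite Rabs_Ropp in H; lra).
  exists (- t2), t2. repeat split; try lra.
  - assert (H := W0_down (- t2) ltac:(lra)). rewrite Eln2 in H.
    replace (/ L * (L * K)) with K in H by (field; lra). lra.
  - assert (H := W0_up t2 ltac:(lra)). rewrite Eln in H.
    replace (/ L * (L * K)) with K in H by (field; lra). lra.
Qed.

Lemma gs_exists : exists u, is_ground_state p M u.
Proof.
  destruct (inv_exists W0 (- phi1) phi1 (fun _ => True)) as [g Hg].
  { intros t Ht. apply W0_cont; auto. }
  { intros y _. apply W0_surj. }
  assert (Hgd : forall r, is_derive g r (exp (- (bb p - 1) * Psi0 (g r)) * Gf p M (g r))).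
  { intros r. destruct (Hg r I) as [Hgr _].
    eapply d_eq; [|apply (inv_deriv W0 (fun t => exp ((bb p - 1) * Psi0 t) / Gf p M t) g (- phi1) phi1 (fun _ => True))].
    - assert (0 < Gf p M (g r)) by (apply Gpos'; auto).
      assert (E : exp (- (bb p - 1) * Psi0 (g r)) = / exp ((bb p - 1) * Psi0 (g r))) by (rewrite <- exp_Ropp; f_equal; ring).
      rewrite E. pose proof (exp_pos ((bb p - 1) * Psi0 (g r))). field. split; lra.
    - intros t Ht. apply W0_d; auto.
    - intros t Ht. apply W0_dpos; auto.
    - intros y _. apply Hg; auto.
    - exact I.
    - exists 1. split; [lra| intros; exact I]. }
  assert (HI : forall r : R, True -> exists d, 0 < d /\ forall s, Rabs (s - r) < d -> True).
  { intros r _. exists 1. split; [lra| auto]. }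
  assert (Hphi : forall r, True -> is_derive g r (exp (- (bb p - 1) * Psi0 (g r)) * Gf p M (g r))) by auto.
  assert (HPsi : forall r, True -> is_derive Psi0 (g r) (g r / Gf p M (g r))).
  { intros r _. apply Psi0_d. apply Hg; auto. }
  assert (HG : forall r, True -> Gf p M (g r) <> 0).
  { intros r _. assert (0 < Gf p M (g r)) by (apply Gpos'; apply Hg; auto). lra. }
  exists (ub Psi0 g). split; [|split; [|split; [|split]]].
  - intros r. apply (build_C2 p M Psi0 g (fun _ => True)); auto.
  - rewrite (Dub p M Psi0 g (fun _ => True) Hphi HPsi HG 0 I). unfold ub1.
    assert (g0 : g 0 = 0).
    { destruct (Hg 0 I) as [Hg0 Hw0].
      assert (Hw0' : W0 (g 0) = W0 0) by (rewrite W0_0; exact Hw0).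
      assert (Hsi : forall s t, - phi1 < s -> s < t -> t < phi1 -> W0 s < W0 t).
      { intros s t Hs Hst Ht. apply (f_sincr W0 (fun t => exp ((bb p - 1) * Psi0 t) / Gf p M t) (- phi1) phi1); auto.
        intros; apply W0_d; auto. intros; apply W0_dpos; auto. }
      destruct (Rtotal_order (g 0) 0) as [Hlt|[Heq|Hgt]]; auto.
      - assert (W0 (g 0) < W0 0) by (apply Hsi; lra). lra.
      - assert (W0 0 < W0 (g 0)) by (apply Hsi; lra). lra. }
    rewrite g0. ring.
  - intros r _. unfold ub. apply Rlt_le, exp_pos.
  - exists 0. split; [lra|]. unfold ub. pose proof (exp_pos (- Psi0 (g 0))). lra.
  - intros r _. apply (build_solves p M Psi0 g (fun _ => True)); auto.
Qed.
End GSC.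

Section SING.
Variables (p M phi1 phi2 L : R).
Hypothesis hp : 1 < p.
Hypothesis H12 : 0 < phi1 < phi2.
Hypothesis HL0 : 0 < L.
Hypothesis Hneg : forall t, phi1 < t < phi2 -> Gf p M t < 0.
Hypothesis HL1 : forall t, phi1 <= t <= phi2 -> - Gf p M t <= L * (t - phi1).
Hypothesis HL2 : forall t, phi1 <= t <= phi2 -> - Gf p M t <= L * (phi2 - t).

Definition phc := (phi1 + phi2) / 2.

Lemma phc_in : phi1 < phc < phi2.
Proof. unfold phc; lra. Qed.

Definition Psi1 := fun x => RInt (fun s => s / Gf p M s) phc x.

Lemma Psi1_d t : phi1 < t < phi2 -> is_derive Psi1 t (t / Gf p M t).
Proof.
  intros Ht. pose proof phc_in as Hc0.
  apply (ftc (fun s => s / Gf p M s) phc phi1 phi2); [lra| |lra].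
  intros s Hs. apply (continuity_pt_div (fun s => s) (Gf p M)).
  - apply derivable_continuous_pt, derivable_pt_id.
  - apply Gf_cont.
  - pose proof (Hneg s Hs); lra.
  - pose proof (Hneg s Hs); lra.
Qed.

Lemma Psi1_cont t : phi1 < t < phi2 -> continuity_pt Psi1 t.
Proof. intros Ht. apply (is_derive_cont _ _ _ (Psi1_d t Ht)). Qed.

Lemma Psi1_c : Psi1 phc = 0.
Proof. apply RInt_0. Qed.

Lemma Psi1_dneg t : phi1 < t < phi2 -> t / Gf p M t < 0.
Proof.
  intros Ht. assert (HG := Hneg t Ht). unfold Rdiv.
  assert (/ Gf p M t < 0) by (apply Rinv_lt_0_compat; lra). nra.
Qed.

Lemma Psi1_nonneg t : phi1 < t <= phc -> 0 <= Psi1 t.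
Proof.
  intros Ht. pose proof phc_in as Hc0. rewrite <- Psi1_c.
  assert (H := incr_deriv (fun x => - Psi1 x) (fun s => - (s / Gf p M s)) t phc).
  cbv beta in H. cut (- Psi1 t <= - Psi1 phc); [lra|]. apply H; try lra.
  - intros s Hs. apply d_opp, Psi1_d; lra.
  - intros s Hs. apply continuity_pt_opp, Psi1_cont; lra.
  - intros s Hs. pose proof (Psi1_dneg s ltac:(lra)). lra.
Qed.

Lemma Psi1_upper t : phc <= t < phi2 ->
  Psi1 t <= phc / L * (ln (phi2 - t) - ln (phi2 - phc)).
Proof.
  intros Ht. pose proof phc_in as Hc0. rewrite <- (Rminus_0_r (Psi1 t)), <- Psi1_c.
  replace (phc / L * (ln (phi2 - t) - ln (phi2 - phc))) with
    (phc / L * ln (phi2 - t) - phc / L * ln (phi2 - phc)) by ring.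
  apply (cmp_deriv Psi1 (fun x => phc / L * ln (phi2 - x)) (fun s => s / Gf p M s)
     (fun x => - (phc / (L * (phi2 - x)))) phc t); try lra.
  - intros x Hx. apply Psi1_d; lra.
  - intros x Hx. auto_derive. lra. field. split; lra.
  - intros x Hx. apply Psi1_cont; lra.
  - intros x Hx. apply continuity_pt_mult. apply continuity_pt_const; intros ??; reflexivity.
    apply (continuity_pt_comp (fun x => phi2 - x) ln).
    apply continuity_pt_minus. apply continuity_pt_const; intros ??; reflexivity.
    apply derivable_continuous_pt, derivable_pt_id.
    apply derivable_continuous_pt. exists (/ (phi2 - x)). apply derivable_pt_lim_ln. lra.
  - intros x Hx. assert (HG := Hneg x ltac:(lra)). assert (HL := HL2 x ltac:(lra)).
    assert (Hq : - (x / Gf p M x) = x / (- Gf p M x)) by (field; lra).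
    assert (x / (- Gf p M x) >= phc / (L * (phi2 - x))).
    { apply Rle_ge. unfold Rdiv. apply Rmult_le_compat; try lra.
      apply Rlt_le, Rinv_0_lt_compat. nra.
      apply Rinv_le_contravar; lra. }
    lra.
Qed.

Definition H1f := fun x => RInt (fun s => exp ((bb p - 1) * Psi1 s) / (- Gf p M s)) phc x.

Lemma H1f_d t : phi1 < t < phi2 -> is_derive H1f t (exp ((bb p - 1) * Psi1 t) / (- Gf p M t)).
Proof.
  intros Ht. pose proof phc_in as Hc0.
  apply (ftc (fun s => exp ((bb p - 1) * Psi1 s) / (- Gf p M s)) phc phi1 phi2); [lra| |lra].
  intros s Hs. apply (continuity_pt_div (fun s => exp ((bb p - 1) * Psi1 s)) (fun s => - Gf p M s)).
  - apply (continuity_pt_comp (fun s => (bb p - 1) * Psi1 s) exp).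
    apply continuity_pt_mult. apply continuity_pt_const; intros ??; reflexivity.
    apply Psi1_cont; auto.
    apply derivable_continuous_pt, derivable_pt_exp.
  - apply continuity_pt_opp, Gf_cont.
  - pose proof (Hneg s Hs); lra.
  - pose proof (Hneg s Hs); lra.
Qed.

Lemma H1f_dpos t : phi1 < t < phi2 -> 0 < exp ((bb p - 1) * Psi1 t) / (- Gf p M t).
Proof. intros Ht. apply Rdiv_lt_0_compat. apply exp_pos. pose proof (Hneg t Ht); lra. Qed.

Lemma H1f_cont t : phi1 < t < phi2 -> continuity_pt H1f t.
Proof. intros Ht. apply (is_derive_cont _ _ _ (H1f_d t Ht)). Qed.

Lemma H1f_c : H1f phc = 0.
Proof. apply RInt_0. Qed.

Lemma H1f_sincr s t : phi1 < s -> s < t -> t < phi2 -> H1f s < H1f t.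
Proof.
  intros. apply (f_sincr H1f (fun t => exp ((bb p - 1) * Psi1 t) / (- Gf p M t)) phi1 phi2); auto.
  intros; apply H1f_d; auto. intros; apply H1f_dpos; auto.
Qed.

Lemma H1f_bound t : phc <= t < phi2 -> H1f t <= / ((bb p - 1) * phc).
Proof.
  intros Ht. pose proof phc_in as Hc0. assert (Hb : 0 < bb p - 1) by (unfold bb; lra).
  set (k := (bb p - 1) * phc). assert (Hk : 0 < k) by (unfold k; nra).
  assert (H : H1f t - H1f phc <= (- exp ((bb p - 1) * Psi1 t) / k) - (- exp ((bb p - 1) * Psi1 phc) / k)).
  { apply (cmp_deriv H1f (fun x => - exp ((bb p - 1) * Psi1 x) / k)
      (fun s => exp ((bb p - 1) * Psi1 s) / (- Gf p M s))
      (fun x => - ((bb p - 1) * (x / Gf p M x) * exp ((bb p - 1) * Psi1 x)) / k) phc t); try lra.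
    - intros x Hx. apply H1f_d; lra.
    - intros x Hx. unfold Rdiv. apply (d_ext (fun x => (-1 / k) * exp ((bb p - 1) * Psi1 x))).
      { intros; unfold Rdiv; ring. }
      eapply d_eq; [| apply d_scal, is_derive_exp_comp, Psi1_d; lra]. unfold Rdiv; ring.
    - intros x Hx. apply H1f_cont; lra.
    - intros x Hx. unfold Rdiv. apply continuity_pt_mult. apply continuity_pt_opp.
      apply (continuity_pt_comp (fun s => (bb p - 1) * Psi1 s) exp).
      apply continuity_pt_mult. apply continuity_pt_const; intros ??; reflexivity.
      apply Psi1_cont; lra. apply derivable_continuous_pt, derivable_pt_exp.
      apply continuity_pt_const; intros ??; reflexivity.
    - intros x Hx. assert (HG := Hneg x ltac:(lra)). assert (He := exp_pos ((bb p - 1) * Psi1 x)).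
      set (E := exp ((bb p - 1) * Psi1 x)) in *. set (G := Gf p M x) in *.
      replace (- ((bb p - 1) * (x / G) * E) / k) with (E / (- G) * (x * (bb p - 1) / k)) by (field; lra).
      rewrite <- (Rmult_1_r (E / - G)) at 1. apply Rmult_le_compat_l.
      apply Rlt_le, Rdiv_lt_0_compat; lra.
      unfold k. apply (Rmult_le_reg_r ((bb p - 1) * phc)); [nra|].
      unfold Rdiv. rewrite Rmult_assoc, Rinv_l by nra. nra. }
  rewrite H1f_c, Psi1_c, Rmult_0_r, exp_0 in H.
  assert (0 < exp ((bb p - 1) * Psi1 t)) by apply exp_pos.
  assert (0 < exp ((bb p - 1) * Psi1 t) / k) by (apply Rdiv_lt_0_compat; lra).
  unfold Rdiv in *. fold k. lra.
Qed.

Lemma H1f_low t : phi1 < t <= phc -> H1f t <= - (/ L * (ln (phc - phi1) - ln (t - phi1))).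
Proof.
  intros Ht. pose proof phc_in as Hc0.
  assert (H : (/ L * ln (phc - phi1)) - (/ L * ln (t - phi1)) <= H1f phc - H1f t).
  { apply (cmp_deriv (fun x => / L * ln (x - phi1)) H1f (fun x => / (L * (x - phi1)))
     (fun s => exp ((bb p - 1) * Psi1 s) / (- Gf p M s)) t phc); try lra.
    - intros x Hx. auto_derive. lra. field. split; lra.
    - intros x Hx. apply H1f_d; lra.
    - intros x Hx. apply continuity_pt_mult. apply continuity_pt_const; intros ??; reflexivity.
      apply (continuity_pt_comp (fun x => x - phi1) ln).
      apply continuity_pt_minus. apply derivable_continuous_pt, derivable_pt_id.
      apply continuity_pt_const; intros ??; reflexivity.
      apply derivable_continuous_pt. exists (/ (x - phi1)). apply derivable_pt_lim_ln. lra.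
    - intros x Hx. apply H1f_cont; lra.
    - intros x Hx. assert (HG := Hneg x ltac:(lra)). assert (HL := HL1 x ltac:(lra)).
      assert (He : 1 <= exp ((bb p - 1) * Psi1 x)).
      { apply Rle_trans with (exp 0); [rewrite exp_0; lra|]. apply exp_le_mono.
        pose proof (Psi1_nonneg x ltac:(lra)). apply Rmult_le_pos; [unfold bb; lra| auto]. }
      unfold Rdiv. apply Rle_trans with (1 * / (- Gf p M x)).
      + rewrite Rmult_1_l. apply Rinv_le_contravar; lra.
      + apply Rmult_le_compat_r; [apply Rlt_le, Rinv_0_lt_compat|]; lra. }
  rewrite H1f_c in H. lra.
Qed.

Lemma H1f_sup : exists S, (forall t, phi1 < t < phi2 -> H1f t < S) /\
   (forall y, y < S -> exists t, phc <= t < phi2 /\ y < H1f t).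
Proof.
  pose proof phc_in as Hc0.
  set (E := fun z => exists t, phc <= t < phi2 /\ z = H1f t).
  assert (HB : bound E).
  { exists (/ ((bb p - 1) * phc)). intros z [t [Ht ->]]. apply H1f_bound; auto. }
  assert (HE : exists z, E z) by (exists (H1f phc); exists phc; split; [lra| auto]).
  destruct (completeness E HB HE) as [S [Hub Hlub]].
  exists S. split.
  - intros t Ht. set (t' := (Rmax t phc + phi2) / 2).
    assert (Ht' : t < t' /\ phc <= t' < phi2).
    { unfold t'. pose proof (Rmax_l t phc). pose proof (Rmax_r t phc).
      assert (Rmax t phc < phi2) by (apply Rmax_lub_lt; lra). lra. }
    assert (H1f t < H1f t') by (apply H1f_sincr; lra).
    assert (H1f t' <= S) by (apply Hub; exists t'; split; [lra| auto]). lra.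
  - intros y Hy. apply NNPP. intros Hno.
    assert (S <= y); [|lra]. apply Hlub. intros z [t [Ht ->]].
    destruct (Rle_lt_dec (H1f t) y) as [|Hlt]; auto. exfalso. apply Hno. exists t; auto.
Qed.

Lemma sing_exists : exists u, is_pos_sol_0inf p M u /\
   filterlim (fun r => u r / U_of p (Xof p phi2) r) (at_right 0) (locally 1) /\
   is_lim (fun r => u r / U_of p (Xof p phi1) r) p_infty 1.
Proof.
  pose proof phc_in as Hc0.
  destruct H1f_sup as [S [HS1 HS2]].
  destruct (inv_exists H1f phi1 phi2 (fun y => y < S)) as [k Hk].
  { intros t Ht. apply H1f_cont; auto. }
  { intros y Hy. destruct (HS2 y Hy) as [t2 [Ht2 Hyt2]].
    set (K := Rabs y + 1). assert (HK : 0 < K) by (unfold K; pose proof (Rabs_pos y); lra).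
    set (t1 := phi1 + (phc - phi1) * exp (- L * K)).
    assert (He : 0 < exp (- L * K) < 1).
    { split. apply exp_pos. apply Rlt_le_trans with (exp 0); [apply exp_increasing; nra| rewrite exp_0; lra]. }
    assert (Ht1 : phi1 < t1 < phc) by (unfold t1; split; nra).
    assert (Eln : ln (phc - phi1) - ln (t1 - phi1) = L * K).
    { replace (t1 - phi1) with ((phc - phi1) * exp (- L * K)) by (unfold t1; ring).
      rewrite ln_mult, ln_exp by (try lra; apply exp_pos). ring. }
    assert (Hlow := H1f_low t1 ltac:(lra)). rewrite Eln in Hlow.
    replace (/ L * (L * K)) with K in Hlow by (field; lra).
    assert (- K < y) by (unfold K; pose proof (Rle_abs (- y)); rewrite Rabs_Ropp in H; lra).
    exists t1, t2. repeat split; lra. }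
  set (df := fun t => exp ((bb p - 1) * Psi1 t) / (- Gf p M t)).
  assert (Hkd : forall y, y < S -> is_derive k y (/ df (k y))).
  { intros y Hy. apply (inv_deriv H1f df k phi1 phi2 (fun y => y < S)); auto.
    - intros t Ht. apply H1f_d; auto.
    - intros t Ht. apply H1f_dpos; auto.
    - exists (S - y). split; [lra|]. intros z Hz. apply Rabs_def2 in Hz. lra. }
  set (ph := fun r => k (S - r)).
  assert (Hph_in : forall r, 0 < r -> phi1 < ph r < phi2).
  { intros r Hr. apply (Hk (S - r)). lra. }
  assert (Hphi : forall r, 0 < r -> is_derive ph r (exp (- (bb p - 1) * Psi1 (ph r)) * Gf p M (ph r))).
  { intros r Hr. unfold ph. eapply d_eq; [|apply (d_comp k (fun r => S - r) r); [apply Hkd; lra| auto_derive; auto]].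
    fold (ph r). unfold df. assert (HG := Hneg (ph r) (Hph_in r Hr)).
    assert (E : exp (- (bb p - 1) * Psi1 (ph r)) = / exp ((bb p - 1) * Psi1 (ph r))) by (rewrite <- exp_Ropp; f_equal; ring).
    rewrite E. pose proof (exp_pos ((bb p - 1) * Psi1 (ph r))). field. split; lra. }
  assert (HI : forall r, 0 < r -> exists d, 0 < d /\ forall s, Rabs (s - r) < d -> 0 < s).
  { intros r Hr. exists r. split; auto. intros s Hs. apply Rabs_def2 in Hs. lra. }
  assert (HPsi : forall r, 0 < r -> is_derive Psi1 (ph r) (ph r / Gf p M (ph r))).
  { intros r Hr. apply Psi1_d. auto. }
  assert (HG : forall r, 0 < r -> Gf p M (ph r) <> 0).
  { intros r Hr. assert (Gf p M (ph r) < 0) by (apply Hneg; auto). lra. }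
  set (y := fun r => - Psi1 (ph r)).
  assert (Hy : forall r, 0 < r -> is_derive y r (- ph r * exp ((bb p - 1) * y r))).
  { intros r Hr. unfold y. eapply d_eq; [|apply d_opp, (PsiPhi_d p M Psi1 ph (fun r => 0 < r) Hphi HPsi HG r Hr)].
    replace ((bb p - 1) * - Psi1 (ph r)) with (- (bb p - 1) * Psi1 (ph r)) by ring. ring. }
  assert (Hkm : forall y1 y2, y1 < S -> y2 < S -> y1 <= y2 -> k y1 <= k y2).
  { intros y1 y2 H1 H2 H3. apply (g_mono H1f df k phi1 phi2 (fun y => y < S)); auto.
    intros t Ht. apply H1f_d; auto. intros t Ht. apply H1f_dpos; auto. }
  exists (ub Psi1 ph). split; [|split].
  - intros r Hr. split; [apply exp_pos|split].
    + apply (build_C2 p M Psi1 ph (fun r => 0 < r)); auto.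
    + apply (build_solves p M Psi1 ph (fun r => 0 < r)); auto.
  -
    apply (asym_0 p hp y ph 1 phi2); try lra; auto.
    + intros r Hr. apply Hy. lra.
    + intros e He. set (e' := Rmin e ((phi2 - phc) / 2)).
      assert (He' : 0 < e' <= e /\ e' < phi2 - phc).
      { unfold e'. split; [split|]. apply Rmin_glb_lt; lra. apply Rmin_l.
        eapply Rle_lt_trans; [apply Rmin_r| lra]. }
      exists (S - H1f (phi2 - e')). split.
      { apply Rlt_Rminus. apply HS1. lra. }
      intros r Hr. assert (Hin := Hph_in r (proj1 Hr)).
      assert (phi2 - e' < ph r).
      { destruct (Rle_lt_dec (ph r) (phi2 - e')) as [Hle|]; auto. exfalso.
        assert (H1f (ph r) <= H1f (phi2 - e')).
        { destruct Hle as [Hlt| ->]; [apply Rlt_le, H1f_sincr; lra| lra]. }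
        destruct (Hk (S - r) ltac:(lra)) as [_ Hkk]. unfold ph in H. rewrite Hkk in H. lra. }
      rewrite Rabs_left by lra. lra.
    + intros e He. assert (Hb : 0 < bb p - 1) by (unfold bb; lra).
      set (c := (phi2 - phc) * exp (L * (ln e / (bb p - 1)) / phc)).
      set (eta := Rmin (phi2 - phc) c).
      assert (Hc : 0 < c) by (unfold c; apply Rmult_lt_0_compat; [lra| apply exp_pos]).
      assert (Heta : 0 < eta /\ eta <= phi2 - phc /\ eta <= c).
      { unfold eta. split; [apply Rmin_glb_lt; lra| split; [apply Rmin_l| apply Rmin_r]]. }
      exists (S - H1f (phi2 - eta)). split.
      { apply Rlt_Rminus. apply HS1. lra. }
      intros r Hr. assert (Hin := Hph_in r (proj1 Hr)).
      assert (Hgt : phi2 - eta < ph r).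
      { destruct (Rle_lt_dec (ph r) (phi2 - eta)) as [Hle|]; auto. exfalso.
        assert (H1f (ph r) <= H1f (phi2 - eta)).
        { destruct Hle as [Hlt| ->]; [apply Rlt_le, H1f_sincr; lra| lra]. }
        destruct (Hk (S - r) ltac:(lra)) as [_ Hkk]. unfold ph in H. rewrite Hkk in H. lra. }
      unfold y. replace (- (bb p - 1) * - Psi1 (ph r)) with ((bb p - 1) * Psi1 (ph r)) by ring.
      rewrite <- (exp_ln e) by auto. apply exp_increasing.
      assert (Hup := Psi1_upper (ph r) ltac:(lra)).
      assert (Hl : ln (phi2 - ph r) < ln c) by (apply ln_increasing; lra).
      unfold c in Hl. rewrite ln_mult, ln_exp in Hl by (try lra; apply exp_pos).
      assert (Hq : Psi1 (ph r) < ln e / (bb p - 1)).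
      { eapply Rle_lt_trans; [exact Hup|].
        apply (Rmult_lt_reg_l (L / phc)). apply Rdiv_lt_0_compat; lra.
        replace (L / phc * (phc / L * (ln (phi2 - ph r) - ln (phi2 - phc)))) with (ln (phi2 - ph r) - ln (phi2 - phc)) by (field; lra).
        replace (L / phc * (ln e / (bb p - 1))) with (L * (ln e / (bb p - 1)) / phc) by (field; lra). lra. }
      apply (Rmult_lt_compat_l (bb p - 1)) in Hq; auto.
      replace ((bb p - 1) * (ln e / (bb p - 1))) with (ln e) in Hq by (field; lra). lra.
  -
    apply (asym_inf p hp y ph 0 phi1); try lra; auto.
    intros e He. set (e' := Rmin e ((phc - phi1) / 2)).
    assert (He' : 0 < e' <= e /\ e' < phc - phi1).
    { unfold e'. split; [split|]. apply Rmin_glb_lt; lra. apply Rmin_l.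
      eapply Rle_lt_trans; [apply Rmin_r| lra]. }
    exists (Rmax 0 (S - H1f (phi1 + e'))). intros r Hr.
    assert (Hr0 : 0 < r) by (eapply Rle_lt_trans; [apply Rmax_l| exact Hr]).
    assert (Hr1 : S - H1f (phi1 + e') < r) by (eapply Rle_lt_trans; [apply Rmax_r| exact Hr]).
    assert (Hin := Hph_in r Hr0).
    assert (ph r < phi1 + e').
    { destruct (Rle_lt_dec (phi1 + e') (ph r)) as [Hle|]; auto. exfalso.
      assert (H1f (phi1 + e') <= H1f (ph r)).
      { destruct Hle as [Hlt| <-]; [apply Rlt_le, H1f_sincr; lra| lra]. }
      destruct (Hk (S - r) ltac:(lra)) as [_ Hkk]. unfold ph in H. rewrite Hkk in H. lra. }
    rewrite Rabs_right by lra. lra.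
Qed.
End SING.

Lemma Lip_spos p M be : 1 < p -> 0 < be -> 0 < Lip p M be.
Proof.
  intros hp H. unfold Lip. pose proof (q_gt1 p hp). pose proof (b_gt1 p hp). pose proof (pw_ge0 be (qq p - 1)).
  pose proof (Rabs_pos M).
  assert (0 <= Rabs M * qq p * pw be (qq p - 1)) by (apply Rmult_le_pos; [apply Rmult_le_pos|]; lra). nra.
Qed.

Theorem theorem4p19 (p M : R) (hp : 1 < p) :
  ((exists u : R -> R, is_ground_state p M u) <-> M <= - mu_star p) /\
  (forall u : R -> R, is_ground_state p M u ->
     exists X2, is_X2 p M X2 /\ equiv_infty u (U_of p X2)) /\
  (M < - mu_star p ->
     exists u : R -> R, is_pos_sol_0inf p M u /\
       (exists X1, is_X1 p M X1 /\ equiv_0 u (U_of p X1)) /\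
       (exists X2, is_X2 p M X2 /\ equiv_infty u (U_of p X2))).
Proof.
  split; [split|split].
  - intros [u Hu]. apply (gs_M p M u hp Hu).
  - intros HM. destruct (root1 p M hp HM) as [phi1 [H1 [H1s [G1 Hpos]]]].
    apply (gs_exists p M phi1 (Lip p M phi1) hp H1 (Lip_spos p M phi1 hp H1) Hpos).
    intros t Ht. assert (H := G_lip p M hp t phi1 phi1 Ht ltac:(lra)). rewrite G1, Rminus_0_r in H.
    rewrite (Rabs_left1 (t - phi1)) in H by lra. replace (- (t - phi1)) with (phi1 - t) in H by ring.
    apply Rabs_def2b in H. lra.
  - intros u Hu. apply (gs_asym p M u hp Hu).
  - intros HM. destruct (root2 p M hp HM) as [phi1 [phi2 [H12 [G1 [G2 [Hp1 [Hn Hp2]]]]]]].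
    set (L := Lip p M phi2).
    assert (HL0 : 0 < L) by (apply Lip_spos; lra).
    destruct (sing_exists p M phi1 phi2 L hp H12 HL0 Hn) as [u [Hu [H0 Hinf]]].
    + intros t Ht. assert (H := G_lip p M hp t phi1 phi2 ltac:(lra) ltac:(lra)). rewrite G1, Rminus_0_r in H.
      rewrite (Rabs_right (t - phi1)) in H by lra. apply Rabs_def2b in H. fold L in H. lra.
    + intros t Ht. assert (H := G_lip p M hp t phi2 phi2 ltac:(lra) ltac:(lra)). rewrite G2, Rminus_0_r in H.
      rewrite (Rabs_left1 (t - phi2)) in H by lra. replace (- (t - phi2)) with (phi2 - t) in H by ring.
      apply Rabs_def2b in H. fold L in H. lra.
    + exists u. split; auto. split.
      * exists (Xof p phi2). split; [apply X1_of; auto; lra| exact H0].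
      * exists (Xof p phi1). split; [apply X2_of; auto; lra| exact Hinf].
Qed.
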